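(* Let $k\ge2$, let $\chi_1,\chi_2$ be primitive non-trivial Dirichlet characters with conductors $q_1,q_2$, let $0\le n\le k-2$, and let $\gamma=\begin{pmatrix}a&b\\c&d\end{pmatrix}\in\Gamma_0(q_1q_2)$ with $c\ge1$. Put $c'=c/q_2$, $z_1=(i-d)/c$ and $\gamma z_1=(i+a)/c$. Then $$\Big|\sum_{A\ge1}\frac{\chi_1(A)}{A^{n+1}}\sum_{B\ge1}\overline{\chi_2}(B)B^{k-n-2}e(ABz_1)\Big|\ll M(d/c')\,c^{k-n-2}\log^2c'$$ and $$\Big|\sum_{A\ge1}\frac{\chi_1(A)}{A^{n+1}}\sum_{B\ge1}\overline{\chi_2}(B)B^{k-n-2}e(AB\gamma z_1)\Big|\ll M(a/c')\,c^{k-n-2}\log^2c',$$ with implied constants independent of $\gamma$.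
   Context: Notation: $e(z)=\exp(2\pi iz)$. For $q\in\mathbb Q$, write its continued fraction expansion as $q=[a_0;a_1,\dots,a_n]$ (the alternative expansion being $[a_0;a_1,\dots,a_n-1,1]$) and set $M(q)=\max\{a_1,\dots,a_n\}$. *)

(* Defs.v *)
From Stdlib Require Import Reals ZArith List Lia.
From Coquelicot Require Export Coquelicot.
Open Scope R_scope.

(* e(z) = exp(2 pi i z), written out for z = x + i y. *)
Definition e (z : C) : C :=
  let r := exp (- 2 * PI * Im z) in
  (r * cos (2 * PI * Re z), r * sin (2 * PI * Re z)).

(* Sum of a complex series sum_{m>=0} f m (real and imaginary parts summed
   separately; this is the usual sum whenever the series converges). *)
Definition CSeries (f : nat -> C) : C :=
  (Series (fun m => Re (f m)), Series (fun m => Im (f m))).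

Definition is_dirichlet_char (q : nat) (chi : Z -> C) : Prop :=
  (0 < q)%nat /\
  chi 1%Z = RtoC 1 /\
  (forall m n : Z, chi (m * n)%Z = Cmult (chi m) (chi n)) /\
  (forall n : Z, chi (n + Z.of_nat q)%Z = chi n) /\
  (forall n : Z, Z.gcd n (Z.of_nat q) <> 1%Z -> chi n = RtoC 0) /\
  (forall n : Z, Z.gcd n (Z.of_nat q) = 1%Z -> chi n <> RtoC 0).

(* chi mod q is primitive: it is not induced by a character of any
   smaller modulus d | q, i.e. for every positive proper divisor d of q there
   is m = 1 (mod d) coprime to q with chi m <> RtoC 1. *)
Definition primitive_mod (q : nat) (chi : Z -> C) : Prop :=
  forall d : Z, (0 < d)%Z -> (d | Z.of_nat q)%Z -> (d < Z.of_nat q)%Z ->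
    exists m : Z, Z.modulo m d = Z.modulo 1 d /\
                  Z.gcd m (Z.of_nat q) = 1%Z /\ chi m <> RtoC 1.

Definition primitive_char_conductor (q : nat) (chi : Z -> C) : Prop :=
  is_dirichlet_char q chi /\ primitive_mod q chi.

Definition nontrivial_char (chi : Z -> C) : Prop :=
  exists n : Z, chi n <> RtoC 0 /\ chi n <> RtoC 1.

Definition in_Gamma0 (N : nat) (a b c d : Z) : Prop :=
  (a * d - b * c)%Z = 1%Z /\ (Z.of_nat N | c)%Z.

(* Partial quotients of p/r produced by the Euclidean algorithm
   (floor division), which gives the continued fraction expansion
   [a0; a1, ..., an] with an >= 2 when n >= 1 (the non-alternative one). *)
Fixpoint cf_quots (fuel : nat) (p r : Z) : list Z :=
  match fuel with
  | O => nil
  | S f => if (r <=? 0)%Z then nil else (p / r)%Z :: cf_quots f r (p mod r)%Z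
  end.

Definition cf_expansion (p r : Z) : list Z := cf_quots (Z.to_nat r + 2) p r.

(* M(p/r) = max{a1, ..., an} (0 if the list is empty, i.e. p/r integer),
   for r >= 1. *)
Definition Mcf (p r : Z) : Z := fold_right Z.max 0%Z (tl (cf_expansion p r)).

Definition double_sum (chi1 chi2 : Z -> C) (k n : nat) (z : C) : C :=
  CSeries (fun i =>
    let A := S i in
    Cmult (Cdiv (chi1 (Z.of_nat A)) (RtoC (INR A ^ (n + 1))))
    (CSeries (fun j =>
      let B := S j in
      Cmult (Cmult (Cconj (chi2 (Z.of_nat B))) (RtoC (INR B ^ (k - n - 2))))
            (e (Cmult (RtoC (INR A * INR B)) z))))).

(* Main.v *)
Require Import Defs.
From Stdlib Require Import Reals ZArith Lia Lra List.
From Coquelicot Require Import Coquelicot.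
Open Scope R_scope.

Open Scope Z_scope.

Lemma case_lt (Q1 Q2 r1 r2 al be : Z) : 1 <= Q1 <= Q2 -> 0 < r1 -> 0 <= r2 ->
  be * Q2 - al * Q1 <> 0 -> Z.abs (be * Q2 - al * Q1) < Q2 ->
  r1 <= Z.abs (al * r1 + be * r2).
Proof.
  intros HQ Hr1 Hr2 Hh Hlt.
  destruct (Z.eq_dec be 0) as [Hb0|Hb0].
  { subst be. assert (al <> 0) by lia.
    rewrite Z.mul_0_l, Z.add_0_r, Z.abs_mul. rewrite (Z.abs_eq r1) by lia.
    assert (1 <= Z.abs al) by lia. nia. }
  destruct (Z.eq_dec al 0) as [Ha0|Ha0].
  { exfalso. subst al. rewrite Z.mul_0_l, Z.sub_0_r, Z.abs_mul, (Z.abs_eq Q2) in Hlt by lia.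
    assert (1 <= Z.abs be) by lia. nia. }
  destruct (Z.le_gt_cases 0 al), (Z.le_gt_cases 0 be).
  - assert (al * r1 >= r1) by nia. assert (be * r2 >= 0) by nia. lia.
  - exfalso. assert (be * Q2 <= - Q2) by nia. assert (al * Q1 >= 0) by nia. lia.
  - exfalso. assert (be * Q2 >= Q2) by nia. assert (al * Q1 <= 0) by nia. lia.
  - assert (al * r1 <= - r1) by nia. assert (be * r2 <= 0) by nia. lia.
Qed.

Lemma dioph_rec (q E : Z) : forall fuel Q0 Q1 r0 r1 al be,
  Z.of_nat fuel > r1 -> 0 < r1 < r0 -> 0 <= Q0 <= Q1 -> 1 <= Q1 ->
  q = Q0 * r1 + Q1 * r0 ->
  List.Forall (fun t => t <= E) (cf_quots fuel r0 r1) ->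
  al * r0 + be * r1 <> 0 -> Q1 <= Z.abs (be * Q1 - al * Q0) ->
  q <= (E + 2) * Z.abs (be * Q1 - al * Q0) * Z.abs (al * r0 + be * r1).
Proof.
  induction fuel as [|f IH]; intros Q0 Q1 r0 r1 al be Hf Hr HQ HQ1 Hq HF Hx0 Hh.
  - simpl in Hf; lia.
  - simpl in HF. destruct (r1 <=? 0) eqn:E1; [lia|].
    apply List.Forall_cons_iff in HF; destruct HF as [Ha HF'].
    assert (Hdiv : r0 = r1 * (r0 / r1) + r0 mod r1) by (apply Z.div_mod; lia).
    assert (Hr2 : 0 <= r0 mod r1 < r1) by (apply Z.mod_pos_bound; lia).
    revert Ha HF' Hdiv Hr2.
    generalize (r0 / r1) (r0 mod r1). intros a r2 Ha HF' Hdiv Hr2.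
    assert (Ha1 : 1 <= a).
    { destruct (Z.le_gt_cases 1 a); auto. assert (r1 * a <= 0) by nia. lia. }
    assert (Hx' : al * r0 + be * r1 = (be + a * al) * r1 + al * r2) by (rewrite Hdiv; ring).
    assert (Hh' : be * Q1 - al * Q0 = - (al * (Q0 + a * Q1) - (be + a * al) * Q1)) by ring.
    rewrite Hx' in *. rewrite Hh' in *. rewrite Z.abs_opp in *.
    remember (Q0 + a * Q1) as Q2 eqn:EQ2.
    remember (be + a * al) as al' eqn:Eal.
    assert (HQ2 : Q1 <= Q2) by nia.
    assert (Hnn : 0 <= Z.abs (al * Q2 - al' * Q1)) by lia.
    destruct (Z_lt_le_dec (Z.abs (al * Q2 - al' * Q1)) Q2) as [Hlt|Hge].
    + assert (Hxr : r1 <= Z.abs (al' * r1 + al * r2)).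
      { apply (case_lt Q1 Q2); lia. }
      assert (Hq2 : q <= (a + 2) * (Q1 * r1)).
      { assert (Q0 * r1 <= Q1 * r1) by nia. assert (Q1 * r2 <= Q1 * r1) by nia.
        rewrite Hq, Hdiv. nia. }
      assert (Hp : Q1 * r1 <= Z.abs (al * Q2 - al' * Q1) * Z.abs (al' * r1 + al * r2)).
      { apply Z.mul_le_mono_nonneg; lia. }
      assert (Hp2 : (a + 2) * (Q1 * r1) <= (E + 2) * (Z.abs (al * Q2 - al' * Q1) * Z.abs (al' * r1 + al * r2))).
      { apply Z.mul_le_mono_nonneg; lia. }
      rewrite <- Z.mul_assoc. lia.
    + destruct (Z.eq_dec r2 0) as [Hz|Hz].
      * subst r2. rewrite Z.mul_0_r, Z.add_0_r in *.
        assert (Hxr : r1 <= Z.abs (al' * r1)).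
        { assert (al' <> 0) by (intro Hb; rewrite Hb in *; lia).
          rewrite Z.abs_mul, (Z.abs_eq r1) by lia. nia. }
        assert (Hq2 : q = Q2 * r1) by (rewrite Hq, Hdiv, EQ2; ring).
        assert (Hp : Q2 * r1 <= Z.abs (al * Q2 - al' * Q1) * Z.abs (al' * r1)).
        { apply Z.mul_le_mono_nonneg; lia. }
        assert (Hp2 : 1 * (Q2 * r1) <= (E + 2) * (Z.abs (al * Q2 - al' * Q1) * Z.abs (al' * r1))).
        { apply Z.mul_le_mono_nonneg; lia. }
        rewrite <- Z.mul_assoc. lia.
      * apply (IH Q1 Q2 r1 r2 al' al); try lia.
                exact HF'.
Qed.

Lemma fold_max_ge : forall l, List.Forall (fun t => t <= fold_right Z.max 0 l) l.
Proof.
  induction l as [|a l IH]; simpl; constructor.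
  - lia.
  - eapply List.Forall_impl; [|exact IH]. intros; simpl in *; lia.
Qed.

Lemma Mcf_unfold (d N : Z) : 0 < N ->
  Mcf d N = fold_right Z.max 0 (cf_quots (S (Z.to_nat N)) N (d mod N)).
Proof.
  intros HN. unfold Mcf, cf_expansion.
  replace (Z.to_nat N + 2)%nat with (S (S (Z.to_nat N))) by lia.
  simpl. destruct (N <=? 0) eqn:E; [lia|]. reflexivity.
Qed.

Lemma dioph (d N h l : Z) : 2 <= N -> Z.gcd d N = 1 -> h <> 0 ->
  h * d - l * N <> 0 ->
  N <= (Mcf d N + 2) * Z.abs h * Z.abs (h * d - l * N).
Proof.
  intros HN Hg Hh Hx.
  set (p := d mod N).
  assert (Hd : d = N * (d / N) + p) by (apply Z.div_mod; lia).
  assert (Hp : 0 <= p < N) by (apply Z.mod_pos_bound; lia).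
  assert (Hp0 : p <> 0).
  { intro H0. assert (Z.gcd d N = N).
    { apply Z.gcd_unique_alt; try lia. intros w. split; intros H.
      - split; auto. rewrite Hd, H0. apply Z.divide_add_r; [apply Z.divide_mul_l; exact H|]. apply Z.divide_0_r.
      - apply H. }
    lia. }
  rewrite (Mcf_unfold d N) by lia. fold p.
  set (D := d / N) in *. clearbody p D.
  replace (h * d - l * N) with ((- (l - h * D)) * N + h * p) by (rewrite Hd; ring).
  replace (Z.abs h) with (Z.abs (h * 1 - (- (l - h * D)) * 0)) by (f_equal; ring).
  apply (dioph_rec N _ (S (Z.to_nat N)) 0 1 N p); try lia.
  - apply fold_max_ge.
Qed.

Lemma cf_quots_le (B : Z) : forall f r0 r1, 0 <= r1 <= r0 -> r0 <= B ->
  List.Forall (fun t => t <= B) (cf_quots f r0 r1).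
Proof.
  induction f as [|f IH]; intros r0 r1 H1 H2; simpl; [constructor|].
  destruct (r1 <=? 0) eqn:E; [constructor|].
  constructor.
  - assert (r0 / r1 <= r0) by (apply Z.div_le_upper_bound; nia). lia.
  - apply IH. assert (0 <= r0 mod r1 < r1) by (apply Z.mod_pos_bound; lia). lia. lia.
Qed.

Lemma fold_max_le (B : Z) : 0 <= B -> forall l, List.Forall (fun t => t <= B) l -> fold_right Z.max 0 l <= B.
Proof. intros HB l H; induction H; simpl; lia. Qed.

Lemma Mcf_bounds (d N : Z) : 2 <= N -> Z.gcd d N = 1 -> 1 <= Mcf d N <= N.
Proof.
  intros HN Hg. rewrite Mcf_unfold by lia.
  assert (Hp : 0 <= d mod N < N) by (apply Z.mod_pos_bound; lia).
  assert (Hp0 : d mod N <> 0).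
  { intro H0. assert (Hd : d = N * (d / N) + d mod N) by (apply Z.div_mod; lia).
    rewrite H0 in Hd. assert (Z.gcd d N = N).
    { rewrite Hd. rewrite Z.add_0_r, Z.gcd_comm, Z.gcd_mul_diag_l; lia. }
    lia. }
  split.
  - simpl. destruct (d mod N <=? 0) eqn:E; [lia|]. simpl.
    assert (1 <= N / (d mod N)). { apply Z.div_le_lower_bound; lia. }
    lia.
  - apply fold_max_le; [lia|]. apply cf_quots_le; lia.
Qed.

Close Scope Z_scope.
Open Scope R_scope.

Fixpoint fsum (f : nat -> R) (n : nat) : R :=
  match n with O => 0 | S n => fsum f n + f n end.

Lemma fsum_ext f g n : (forall i, (i < n)%nat -> f i = g i) -> fsum f n = fsum g n.
Proof. induction n; simpl; intros H; auto. rewrite IHn by (intros; apply H; lia). rewrite H by lia. auto. Qed.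

Lemma fsum_le f g n : (forall i, (i < n)%nat -> f i <= g i) -> fsum f n <= fsum g n.
Proof. induction n; simpl; intros H; [lra|]. assert (f n <= g n) by (apply H; lia).
  assert (fsum f n <= fsum g n) by (apply IHn; intros; apply H; lia). lra. Qed.

Lemma fsum_zero n : fsum (fun _ => 0) n = 0.
Proof. induction n; simpl; auto. rewrite IHn; ring. Qed.

Lemma fsum_nonneg f n : (forall i, (i < n)%nat -> 0 <= f i) -> 0 <= fsum f n.
Proof. intros H. rewrite <- (fsum_zero n). apply fsum_le; auto. Qed.

Lemma fsum_scal c f n : fsum (fun i => c * f i) n = c * fsum f n.
Proof. induction n; simpl; [ring|]. rewrite IHn; ring. Qed.

Lemma fsum_plus f g n : fsum (fun i => f i + g i) n = fsum f n + fsum g n.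
Proof. induction n; simpl; [ring|]. rewrite IHn; ring. Qed.

Lemma fsum_add f a b : fsum f (a + b) = fsum f a + fsum (fun j => f (a + j)%nat) b.
Proof. induction b; simpl. rewrite Nat.add_0_r; ring. rewrite Nat.add_succ_r. simpl. rewrite IHb; ring. Qed.

Lemma fsum_mono f n m : (n <= m)%nat -> (forall i, 0 <= f i) -> fsum f n <= fsum f m.
Proof. intros H Hf. replace m with (n + (m - n))%nat by lia. rewrite fsum_add.
  assert (0 <= fsum (fun j => f (n + j)%nat) (m - n)) by (apply fsum_nonneg; auto). lra. Qed.

Lemma fsum_at_most_one (q : nat -> bool) (c : R) n : 0 <= c ->
  (forall a b, (a < n)%nat -> (b < n)%nat -> q a = true -> q b = true -> a = b) ->
  fsum (fun a => if q a then c else 0) n <= c.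
Proof.
  intros Hc. induction n; simpl; intros H; [lra|].
  destruct (q n) eqn:Eq.
  - replace (fsum (fun a => if q a then c else 0) n) with 0. lra.
    rewrite <- (fsum_zero n) at 1. apply fsum_ext. intros i Hi. destruct (q i) eqn:Ei; auto.
    assert (i = n) by (apply H; auto; lia). lia.
  - assert (fsum (fun a => if q a then c else 0) n <= c) by (apply IHn; intros; apply H; auto; lia). lra.
Qed.

Lemma fsum_inj (f : nat -> nat) (g : nat -> R) (n : nat) : forall J (p : nat -> bool),
  (forall j, 0 <= g j) ->
  (forall a, (a < n)%nat -> p a = true -> (f a < J)%nat) ->
  (forall a b, (a < n)%nat -> (b < n)%nat -> p a = true -> p b = true -> f a = f b -> a = b) ->
  fsum (fun a => if p a then g (f a) else 0) n <= fsum g J.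
Proof.
  induction J as [|J IH]; intros p Hg Hf Hinj.
  - simpl. rewrite (fsum_ext _ (fun _ => 0)). rewrite fsum_zero; lra. intros i Hi.
    destruct (p i) eqn:E; auto. specialize (Hf i Hi E). lia.
  - simpl.
    rewrite (fsum_ext _ (fun a => (if (p a && (f a <? J)%nat)%bool then g (f a) else 0) +
                                 (if (p a && (f a =? J)%nat)%bool then g J else 0))).
    + rewrite fsum_plus.
      assert (fsum (fun a => if (p a && (f a <? J)%nat)%bool then g (f a) else 0) n <= fsum g J).
      { apply IH; auto.
        - intros a Ha H. apply andb_prop in H. destruct H as [_ H]. apply Nat.ltb_lt in H. auto.
        - intros a b Ha Hb H1 H2. apply andb_prop in H1. apply andb_prop in H2. apply Hinj; tauto. }
      assert (fsum (fun a => if (p a && (f a =? J)%nat)%bool then g J else 0) n <= g J).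
      { apply fsum_at_most_one; auto. intros a b Ha Hb H1 H2.
        apply andb_prop in H1. apply andb_prop in H2. destruct H1 as [H1 H1']. destruct H2 as [H2 H2'].
        apply Nat.eqb_eq in H1'. apply Nat.eqb_eq in H2'. apply Hinj; auto. lia. }
      lra.
    + intros i Hi. destruct (p i) eqn:E; simpl.
      * specialize (Hf i Hi E). destruct (Nat.ltb_spec (f i) J); destruct (Nat.eqb_spec (f i) J); try lia.
        ring. subst. ring.
      * ring.
Qed.

Lemma fsum_periodic (g0 : nat -> R) (J L : nat) :
  fsum (fun j => g0 (j mod J)) (L * J) = INR L * fsum g0 J.
Proof.
  induction L. simpl; ring.
  replace (S L * J)%nat with (L * J + J)%nat by lia. rewrite fsum_add, IHL, S_INR.
  assert (E : fsum (fun j => g0 ((L * J + j) mod J)) J = fsum g0 J).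
  { apply fsum_ext. intros i Hi.
    f_equal. replace (L * J + i)%nat with (i + L * J)%nat by lia. rewrite Nat.Div0.mod_add. apply Nat.mod_small; auto. }
  rewrite E. ring.
Qed.

Lemma ln_le_minus1 y : 0 < y -> ln y <= y - 1.
Proof.
  intros Hy. destruct (Rle_lt_dec (ln y) (y - 1)); auto.
  exfalso. apply exp_increasing in r. rewrite exp_ln in r by auto.
  pose proof (exp_ineq1_le (y - 1)). lra.
Qed.

Lemma ln_le' x y : 0 < x -> x <= y -> ln x <= ln y.
Proof. intros Hx Hxy. destruct (Req_dec x y). subst; lra. left; apply ln_increasing; lra. Qed.

Lemma harmonic J : (1 <= J)%nat -> fsum (fun j => / (INR j + 1)) J <= 1 + ln (INR J).
Proof.
  induction J; intros H; [lia|].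
  destruct (Nat.eq_dec J 0). subst. simpl. rewrite ln_1. lra.
  simpl fsum. specialize (IHJ ltac:(lia)).
  assert (HJ : 1 <= INR J) by (apply (le_INR 1); lia).
  rewrite S_INR.
  assert (ln (INR J / (INR J + 1)) <= INR J / (INR J + 1) - 1) by (apply ln_le_minus1; apply Rdiv_lt_0_compat; lra).
  unfold Rdiv in H0. rewrite ln_mult, ln_Rinv in H0 by (try apply Rinv_0_lt_compat; lra).
  replace (INR J * / (INR J + 1) - 1) with (- / (INR J + 1)) in H0 by (field; lra).
  lra.
Qed.

Section DS.
Variables d N : Z.
Hypothesis HN : (2 <= N)%Z.
Hypothesis Hg : Z.gcd d N = 1%Z.

Definition rr (A : nat) : Z := ((Z.of_nat A * d) mod N)%Z.
Definition del (A : nat) : Z := Z.min (rr A) (N - rr A).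
Definition cls (A : nat) : Z := if (2 * rr A <=? N)%Z then 0%Z else 1%Z.

Lemma N_div_mul_gcd (h : Z) : (N | h * d)%Z -> (N | h)%Z.
Proof. intros H. apply Z.gauss with d; auto. rewrite Z.mul_comm; auto. rewrite Z.gcd_comm; auto. Qed.

Lemma not_div_small (h : Z) : (0 < Z.abs h < N)%Z -> ~ (N | h)%Z.
Proof.
  intros Hh [t Ht]. subst h. rewrite Z.abs_mul in Hh. rewrite (Z.abs_eq N) in Hh by lia.
  destruct (Z.eq_dec t 0). subst; simpl in Hh; lia. assert (1 <= Z.abs t)%Z by lia. nia.
Qed.

Lemma rr_spec A : (Z.of_nat A * d = N * ((Z.of_nat A * d) / N) + rr A /\ 0 <= rr A < N)%Z.
Proof. unfold rr. split. apply Z.div_mod; lia. apply Z.mod_pos_bound; lia. Qed.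

Lemma rr_pos A : (1 <= A)%nat -> (Z.of_nat A < N)%Z -> (1 <= rr A)%Z.
Proof.
  intros H1 H2. destruct (rr_spec A) as [E B].
  destruct (Z.eq_dec (rr A) 0); [|lia]. exfalso.
  apply (not_div_small (Z.of_nat A)); [lia|]. apply N_div_mul_gcd.
  exists ((Z.of_nat A * d) / N)%Z. rewrite e in E. rewrite E at 1. ring.
Qed.

Lemma del_bounds A : (1 <= A)%nat -> (Z.of_nat A < N)%Z -> (1 <= del A /\ 2 * del A <= N)%Z.
Proof. intros H1 H2. pose proof (rr_pos A H1 H2). pose proof (rr_spec A). unfold del. lia. Qed.

Lemma del_repr A : exists l, (del A = Z.abs (Z.of_nat A * d - l * N) /\
   (cls A = 0 -> Z.of_nat A * d - l * N = rr A) /\ (cls A = 1 -> Z.of_nat A * d - l * N = rr A - N))%Z.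
Proof.
  destruct (rr_spec A) as [E B]. unfold del, cls.
  set (Q := ((Z.of_nat A * d) / N)%Z) in *. clearbody Q.
  set (X := (Z.of_nat A * d)%Z) in *. clearbody X.
  assert (E1 : (X - Q * N = rr A)%Z) by (rewrite E; ring).
  assert (E2 : (X - (Q + 1) * N = rr A - N)%Z) by (rewrite E; ring).
  rewrite ?E1, ?E2. 
  destruct (Z.leb_spec (2 * rr A) N).
  - exists Q. rewrite E1. split; [|split]; intros; cbn iota in *; try lia.
  - exists (Q + 1)%Z. rewrite E2. split; [|split]; intros; cbn iota in *; try lia.
    all: try (rewrite Z.min_r by lia; rewrite Z.abs_neq; lia).
Qed.

Lemma del_lower A : (1 <= A)%nat -> (Z.of_nat A < N)%Z -> (N <= (Mcf d N + 2) * Z.of_nat A * del A)%Z.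
Proof.
  intros H1 H2. destruct (del_repr A) as [l [El _]]. rewrite El.
  pose proof (del_bounds A H1 H2).
  assert (Hd := dioph d N (Z.of_nat A) l HN Hg ltac:(lia) ltac:(lia)).
  rewrite (Z.abs_eq (Z.of_nat A)) in Hd by lia. exact Hd.
Qed.

Lemma del_sep A1 A2 : (1 <= A1)%nat -> (Z.of_nat A1 < N)%Z -> (1 <= A2)%nat -> (Z.of_nat A2 < N)%Z ->
  A1 <> A2 -> cls A1 = cls A2 ->
  (N <= (Mcf d N + 2) * Z.abs (Z.of_nat A1 - Z.of_nat A2) * Z.abs (del A1 - del A2))%Z.
Proof.
  intros H1 H2 H3 H4 Hne Hc.
  destruct (del_repr A1) as [l1 [E1 [C1 D1]]]. destruct (del_repr A2) as [l2 [E2 [C2 D2]]].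
  assert (Hx : (Z.abs (del A1 - del A2) = Z.abs ((Z.of_nat A1 - Z.of_nat A2) * d - (l1 - l2) * N))%Z).
  { unfold cls in *. destruct (Z.leb_spec (2 * rr A1) N), (Z.leb_spec (2 * rr A2) N); try discriminate.
    - specialize (C1 eq_refl). specialize (C2 eq_refl). unfold del.
      destruct (rr_spec A1), (rr_spec A2). rewrite Z.min_l by lia. rewrite Z.min_l by lia.
      f_equal. rewrite <- C1, <- C2. ring.
    - specialize (D1 eq_refl). specialize (D2 eq_refl). unfold del.
      destruct (rr_spec A1), (rr_spec A2). rewrite Z.min_r by lia. rewrite Z.min_r by lia.
      rewrite <- Z.abs_opp. f_equal. replace (N - rr A1 - (N - rr A2))%Z with (- ((rr A1 - N) - (rr A2 - N)))%Z by ring.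
      rewrite <- D1, <- D2. ring. }
  rewrite Hx. apply dioph; auto; try lia.
  intro H0. apply (not_div_small (Z.of_nat A1 - Z.of_nat A2)); [lia|].
  apply N_div_mul_gcd. exists (l1 - l2)%Z. lia.
Qed.

End DS.

Lemma inv_le_div x y z : 0 < x -> 0 < y -> y <= x * z -> / x <= z / y.
Proof.
  intros Hx Hy H. unfold Rdiv.
  apply Rmult_le_reg_l with (x * y). nra.
  replace (x * y * / x) with y by (field; lra).
  replace (x * y * (z * / y)) with (x * z) by (field; lra). lra.
Qed.

Lemma split_key (a a' b b' J : nat) : (b < J)%nat -> (b' < J)%nat -> (a * J + b = a' * J + b')%nat -> a = a' /\ b = b'.
Proof.
  intros H1 H2 H. destruct (Nat.lt_total a a') as [Hl|[He|Hl]].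
  - exfalso. assert (a * J + J <= a' * J)%nat by nia. lia.
  - subst. lia.
  - exfalso. assert (a' * J + J <= a * J)%nat by nia. lia.
Qed.

Section DS2.
Variables d N : Z.
Hypothesis HN : (2 <= N)%Z.
Hypothesis Hg : Z.gcd d N = 1%Z.

Let M := Mcf d N.
Definition TT (A : nat) : Z := Z.of_nat (2 ^ Nat.log2 A).
Definition kk (A : nat) : Z := (del d N A * (Mcf d N + 2) * TT A / N)%Z.
Definition JJ : nat := Z.to_nat (2 * (Mcf d N + 2) * N + 2).
Definition key (A : nat) : nat := (Nat.log2 A * JJ + Z.to_nat (2 * kk A + cls d N A))%nat.
Definition g0 (j : nat) : R := / (INR (j / 2) + 1).
Definition gk (j : nat) : R := g0 (j mod JJ).

Lemma TT_spec A : (1 <= A)%nat -> (1 <= TT A /\ TT A <= Z.of_nat A < 2 * TT A)%Z.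
Proof.
  intros H. unfold TT. pose proof (Nat.log2_spec A ltac:(lia)) as [H1 H2].
  rewrite Nat.pow_succ_r' in H2. pose proof (Nat.pow_nonzero 2 (Nat.log2 A)). lia.
Qed.

Lemma Mb : (1 <= M <= N)%Z.
Proof. apply Mcf_bounds; auto. Qed.

Lemma kk_spec A : (N * kk A <= del d N A * (M + 2) * TT A < N * (kk A + 1) /\ 0 <= kk A)%Z.
Proof.
  unfold kk. fold M. set (X := (del d N A * (M + 2) * TT A)%Z).
  pose proof (Z.div_mod X N ltac:(lia)). pose proof (Z.mod_pos_bound X N ltac:(lia)).
  split; [lia|].
  apply Z.div_pos; [|lia]. unfold X. unfold del, TT. pose proof (rr_spec d N HN A). pose proof Mb. 
  apply Z.mul_nonneg_nonneg; [apply Z.mul_nonneg_nonneg|]; lia.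
Qed.

Lemma cls01 A : (cls d N A = 0 \/ cls d N A = 1)%Z.
Proof. unfold cls. destruct (2 * rr d N A <=? N)%Z; auto. Qed.

Lemma kk_le A : (1 <= A)%nat -> (Z.of_nat A < N)%Z -> (kk A <= (M + 2) * N)%Z.
Proof.
  intros H1 H2. pose proof (kk_spec A). pose proof (TT_spec A H1). pose proof (del_bounds d N HN Hg A H1 H2).
  pose proof Mb.
  assert (del d N A * (M + 2) * TT A <= N * ((M + 2) * N))%Z.
  { replace (N * ((M + 2) * N))%Z with (N * (M + 2) * N)%Z by ring.
    assert (del d N A * (M + 2) <= N * (M + 2))%Z by (apply Z.mul_le_mono_nonneg_r; lia).
    apply Z.mul_le_mono_nonneg; try lia. }
  apply (Z.mul_le_mono_pos_l _ _ N); [lia|]. lia.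
Qed.

Lemma key_mod A : (1 <= A)%nat -> (Z.of_nat A < N)%Z -> (key A mod JJ = Z.to_nat (2 * kk A + cls d N A))%nat.
Proof.
  intros H1 H2. unfold key. pose proof (kk_le A H1 H2). pose proof (kk_spec A). pose proof (cls01 A).
  rewrite Nat.add_comm, Nat.Div0.mod_add. apply Nat.mod_small. unfold JJ. pose proof Mb. lia.
Qed.

Lemma key_lt A : (1 <= A)%nat -> (Z.of_nat A < N)%Z -> (key A < (Nat.log2 (Z.to_nat N) + 1) * JJ)%nat.
Proof.
  intros H1 H2. unfold key. pose proof (kk_le A H1 H2). pose proof (kk_spec A). pose proof (cls01 A).
  assert (Nat.log2 A <= Nat.log2 (Z.to_nat N))%nat by (apply Nat.log2_le_mono; lia).
  assert (Z.to_nat (2 * kk A + cls d N A) < JJ)%nat by (unfold JJ; pose proof Mb; lia).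
  nia.
Qed.

Lemma key_inj A1 A2 : (1 <= A1)%nat -> (Z.of_nat A1 < N)%Z -> (1 <= A2)%nat -> (Z.of_nat A2 < N)%Z ->
  key A1 = key A2 -> A1 = A2.
Proof.
  intros H1 H2 H3 H4 Hk. unfold key in Hk.
  pose proof (kk_le A1 H1 H2). pose proof (kk_spec A1). pose proof (cls01 A1).
  pose proof (kk_le A2 H3 H4). pose proof (kk_spec A2). pose proof (cls01 A2).
  pose proof Mb.
  apply split_key in Hk; try (unfold JJ; lia). destruct Hk as [Hl Hb].
  assert (Ek : kk A1 = kk A2) by lia. assert (Ec : cls d N A1 = cls d N A2) by lia.
  assert (ET : TT A1 = TT A2) by (unfold TT; rewrite Hl; auto).
  destruct (Nat.eq_dec A1 A2) as [|Hne]; auto. exfalso.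
  pose proof (del_sep d N HN Hg A1 A2 H1 H2 H3 H4 Hne Ec) as Hs. fold M in Hs.
  pose proof (TT_spec A1 H1). pose proof (TT_spec A2 H3).
  set (T := TT A1) in *. set (k := kk A1) in *.
  set (D1 := del d N A1) in *. set (D2 := del d N A2) in *.
  assert (Hh : (Z.abs (Z.of_nat A1 - Z.of_nat A2) <= T - 1)%Z) by lia.
  assert (HD : (Z.abs (D1 - D2) * (M + 2) * T < N)%Z).
  { rewrite <- ET in *. destruct (Z.le_gt_cases D1 D2).
    - rewrite Z.abs_neq by lia. nia.
    - rewrite Z.abs_eq by lia. nia. }
  assert ((M + 2) * Z.abs (Z.of_nat A1 - Z.of_nat A2) * Z.abs (D1 - D2) <= (M + 2) * (T - 1) * Z.abs (D1 - D2))%Z.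
  { apply Z.mul_le_mono_nonneg_r; [lia|]. apply Z.mul_le_mono_nonneg_l; lia. }
  nia.
Qed.

Lemma term_bound A : (1 <= A)%nat -> (Z.of_nat A < N)%Z ->
  / (INR A * IZR (del d N A)) <= (2 * (IZR M + 2) / IZR N) * gk (key A).
Proof.
  intros H1 H2. unfold gk, g0. rewrite key_mod by auto.
  pose proof (kk_le A H1 H2). pose proof (kk_spec A). pose proof (cls01 A) as Hc.
  pose proof (TT_spec A H1). pose proof (del_bounds d N HN Hg A H1 H2). pose proof Mb.
  pose proof (del_lower d N HN Hg A H1 H2) as HL. fold M in HL.
  replace (Z.to_nat (2 * kk A + cls d N A) / 2)%nat with (Z.to_nat (kk A)).
  2:{ destruct Hc as [E|E]; rewrite E.
      - replace (2 * kk A + 0)%Z with (Z.of_nat (Z.to_nat (kk A) * 2)) by lia. rewrite Nat2Z.id, Nat.div_mul; lia.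
      - replace (2 * kk A + 1)%Z with (Z.of_nat (1 + Z.to_nat (kk A) * 2)) by lia. rewrite Nat2Z.id, Nat.div_add; simpl; lia. }
  rewrite (INR_IZR_INZ (Z.to_nat (kk A))), Z2Nat.id by lia.
  assert (Hint : ((kk A + 1) * N <= 2 * (M + 2) * (Z.of_nat A * del d N A))%Z).
  { destruct (Z.eq_dec (kk A) 0) as [E|E].
    - rewrite E. nia.
    - nia. }
  assert (Hr : IZR ((kk A + 1) * N) <= IZR (2 * (M + 2) * (Z.of_nat A * del d N A))) by (apply IZR_le; auto).
  rewrite !mult_IZR, plus_IZR in Hr. rewrite <- INR_IZR_INZ in Hr.
  assert (0 < INR A) by (apply (lt_INR 0); lia).
  assert (1 <= IZR (del d N A)) by (apply IZR_le; lia).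
  assert (2 <= IZR N) by (apply IZR_le; lia).
  assert (0 <= IZR (kk A)) by (apply IZR_le; lia).
  assert (1 <= IZR M) by (apply IZR_le; lia).
  replace (2 * (IZR M + 2) / IZR N * / (IZR (kk A) + 1)) with ((2 * (IZR M + 2)) / (IZR N * (IZR (kk A) + 1))) by (field; lra).
  apply inv_le_div; try nra.
  rewrite plus_IZR in Hr. simpl (IZR 2) in Hr. lra.
Qed.

End DS2.

Lemma ln2_bounds : / 2 < ln 2 < 1.
Proof.
  split. apply ln_lt_2. rewrite <- ln_exp with 1. apply ln_increasing. lra.
  pose proof (exp_ineq1 1 ltac:(lra)). lra.
Qed.

Lemma ln_ge_half x : 2 <= x -> / 2 < ln x.
Proof. intros H. pose proof ln2_bounds. pose proof (ln_le' 2 x ltac:(lra) H). lra. Qed.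

Lemma dsum (d N : Z) : (2 <= N)%Z -> Z.gcd d N = 1%Z ->
  fsum (fun A => if (1 <=? A)%nat then / (INR A * IZR (del d N A)) else 0) (Z.to_nat N)
  <= 480 * IZR (Mcf d N) * ln (IZR N) ^ 2 / IZR N.
Proof.
  intros HN Hg.
  set (M := Mcf d N).
  pose proof (Mb d N HN Hg) as HM. fold M in HM.
  set (C0 := 2 * (IZR M + 2) / IZR N).
  set (L := (Nat.log2 (Z.to_nat N) + 1)%nat).
  assert (HNr : 2 <= IZR N) by (apply IZR_le; lia).
  assert (HMr : 1 <= IZR M <= IZR N) by (split; apply IZR_le; lia).
  assert (S1 : fsum (fun A => if (1 <=? A)%nat then / (INR A * IZR (del d N A)) else 0) (Z.to_nat N)
     <= C0 * fsum (fun A => if (1 <=? A)%nat then gk d N (key d N A) else 0) (Z.to_nat N)).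
  { rewrite <- fsum_scal. apply fsum_le. intros i Hi.
    destruct (Nat.leb_spec 1 i).
    - apply term_bound; auto. lia.
    - lra. }
  assert (S2 : fsum (fun A => if (1 <=? A)%nat then gk d N (key d N A) else 0) (Z.to_nat N)
     <= fsum (gk d N) (L * JJ d N)).
  { apply fsum_inj.
    - intros j. unfold gk, g0. left. apply Rinv_0_lt_compat. pose proof (pos_INR ((j mod JJ d N) / 2)). lra.
    - intros a Ha H. apply Nat.leb_le in H. apply key_lt; auto. lia.
    - intros a b Ha Hb H1 H2 H. apply Nat.leb_le in H1. apply Nat.leb_le in H2.
      apply (key_inj d N HN Hg); auto; lia. }
  assert (S3 : fsum (gk d N) (L * JJ d N) = INR L * fsum g0 (JJ d N)).
  { unfold gk. apply fsum_periodic. }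
  assert (HJ1 : (1 <= JJ d N)%nat) by (unfold JJ; fold M; lia).
  assert (S4 : fsum g0 (JJ d N) <= 2 * (1 + ln (INR (JJ d N)))).
  { apply Rle_trans with (fsum (fun j => 2 * / (INR j + 1)) (JJ d N)).
    - apply fsum_le. intros i _. unfold g0.
      pose proof (pos_INR (i / 2)). pose proof (pos_INR i).
      assert (INR i + 1 <= 2 * (INR (i / 2) + 1)).
      { assert (i <= 2 * (i / 2) + 1)%nat by (pose proof (Nat.div_mod i 2 ltac:(lia)); pose proof (Nat.mod_upper_bound i 2 ltac:(lia)); lia).
        apply le_INR in H1. rewrite plus_INR, mult_INR in H1. replace (INR 2) with 2 in H1 by (simpl; ring). change (INR 1) with 1 in H1. lra. }
      rewrite <- (Rmult_1_l (/ (INR (i / 2) + 1))).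
      apply Rle_trans with (2 * / (INR i + 1)); [|lra].
      replace (2 * / (INR i + 1)) with (/ ((INR i + 1) / 2)) by (field; lra).
      rewrite Rmult_1_l. apply Rinv_le_contravar; lra.
    - rewrite fsum_scal. pose proof (harmonic (JJ d N) HJ1). lra. }
  assert (HlnN : / 2 < ln (IZR N)) by (apply ln_ge_half; auto).
  pose proof ln2_bounds as Hl2.
  assert (HL : INR L <= 4 * ln (IZR N)).
  { unfold L. rewrite plus_INR. simpl INR at 2.
    pose proof (Nat.log2_spec (Z.to_nat N) ltac:(lia)) as [Hp _].
    apply le_INR in Hp. rewrite pow_INR in Hp. simpl INR in Hp.
    rewrite INR_IZR_INZ, Z2Nat.id in Hp by lia.
    assert (Hln := ln_le' _ _ (pow_lt 2 (Nat.log2 (Z.to_nat N)) ltac:(lra)) Hp).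
    rewrite ln_pow in Hln by lra.
    assert (INR (Nat.log2 (Z.to_nat N)) <= 2 * ln (IZR N)).
    { pose proof (pos_INR (Nat.log2 (Z.to_nat N))). nra. }
    lra. }
  assert (HJ : 1 + ln (INR (JJ d N)) <= 10 * ln (IZR N)).
  { assert (INR (JJ d N) <= 8 * IZR N ^ 2).
    { unfold JJ. fold M. rewrite INR_IZR_INZ, Z2Nat.id by lia.
      rewrite plus_IZR, !mult_IZR, plus_IZR. simpl IZR. nra. }
    assert (0 < INR (JJ d N)) by (apply (lt_INR 0); lia).
    pose proof (ln_le' _ _ H0 H).
    rewrite ln_mult in H1 by (try apply pow_lt; lra). rewrite ln_pow in H1 by lra.
    replace 8 with (2 ^ 3) in H1 by ring. rewrite ln_pow in H1 by lra. simpl INR in H1. lra. }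
  assert (HC0 : C0 <= 6 * IZR M / IZR N).
  { unfold C0. unfold Rdiv. apply Rmult_le_compat_r. left; apply Rinv_0_lt_compat; lra. lra. }
  assert (0 <= fsum g0 (JJ d N)).
  { apply fsum_nonneg. intros. unfold g0. left. apply Rinv_0_lt_compat. pose proof (pos_INR (i / 2)). lra. }
  assert (0 <= C0) by (unfold C0; apply Rmult_le_pos; [lra|left; apply Rinv_0_lt_compat; lra]).
  assert (0 <= INR L) by apply pos_INR.
  apply Rle_trans with (C0 * (INR L * fsum g0 (JJ d N))).
  { rewrite <- S3. apply Rle_trans with (1 := S1). apply Rmult_le_compat_l; auto. }
  apply Rle_trans with ((6 * IZR M / IZR N) * ((4 * ln (IZR N)) * (2 * (10 * ln (IZR N))))).
  { apply Rmult_le_compat; try lra. apply Rmult_le_pos; lra.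
    apply Rmult_le_compat; lra. }
  apply Req_le. field. lra.
Qed.

Lemma fsum_ge_term (f : nat -> R) n j : (forall i, 0 <= f i) -> (j < n)%nat -> f j <= fsum f n.
Proof.
  intros Hf. induction n; intros Hj; [lia|]. simpl.
  destruct (Nat.eq_dec j n). subst. pose proof (fsum_nonneg f n (fun i _ => Hf i)). lra.
  pose proof (IHn ltac:(lia)). pose proof (Hf n). lra.
Qed.

Section Char.
Variables (q : nat) (chi : Z -> C).
Hypothesis Hc : is_dirichlet_char q chi.

Lemma chi_per_k : forall (k : nat) (n : Z), chi (n + Z.of_nat k * Z.of_nat q)%Z = chi n.
Proof.
  destruct Hc as [_ [_ [_ [Hp _]]]].
  induction k; intros n. simpl. rewrite Z.add_0_r. auto.
  replace (n + Z.of_nat (S k) * Z.of_nat q)%Z with ((n + Z.of_nat k * Z.of_nat q) + Z.of_nat q)%Z by lia.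
  rewrite Hp. auto.
Qed.

Lemma chi_mod : forall n : Z, chi n = chi (n mod Z.of_nat q)%Z.
Proof.
  intros n. destruct Hc as [Hq _].
  assert (E : (n = (n mod Z.of_nat q) + (n / Z.of_nat q) * Z.of_nat q)%Z).
  { rewrite Z.add_comm, Z.mul_comm. apply Z.div_mod. lia. }
  destruct (Z.le_gt_cases 0 (n / Z.of_nat q)) as [H|H].
  - rewrite E at 1. rewrite <- (Z2Nat.id (n / Z.of_nat q)) by lia. apply chi_per_k.
  - rewrite <- (chi_per_k (Z.to_nat (- (n / Z.of_nat q))) n).
    f_equal. rewrite Z2Nat.id by lia. rewrite E at 1. ring.
Qed.

Lemma chi_bounded : forall n, Cmod (chi n) <= fsum (fun j => Cmod (chi (Z.of_nat j))) q.
Proof.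
  intros n. rewrite chi_mod. destruct Hc as [Hq _].
  assert (H : (0 <= n mod Z.of_nat q < Z.of_nat q)%Z) by (apply Z.mod_pos_bound; lia).
  rewrite <- (Z2Nat.id (n mod Z.of_nat q)) by lia.
  apply (fsum_ge_term (fun j => Cmod (chi (Z.of_nat j)))). intros; apply Cmod_ge_0. lia.
Qed.

Lemma chi_mult_pow : forall (n : Z) (j : nat), chi (n ^ Z.of_nat j)%Z = Cpow (chi n) j.
Proof.
  destruct Hc as [_ [H1 [Hm _]]].
  intros n j. induction j. simpl. auto.
  rewrite Nat2Z.inj_succ, Z.pow_succ_r by lia. rewrite Hm, IHj. simpl. ring.
Qed.

Lemma bernoulli (t : R) (j : nat) : 0 <= t -> 1 + INR j * t <= (1 + t) ^ j.
Proof.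
  intros Ht. induction j. simpl. lra. rewrite S_INR. simpl.
  assert (0 <= INR j * t * t) by (apply Rmult_le_pos; [apply Rmult_le_pos; [apply pos_INR|]|]; lra). nra.
Qed.

Lemma chi_le_1 : forall n, Cmod (chi n) <= 1.
Proof.
  intros n. set (K := fsum (fun j => Cmod (chi (Z.of_nat j))) q).
  destruct (Rle_lt_dec (Cmod (chi n)) 1) as [H|H]; auto. exfalso.
  set (t := Cmod (chi n) - 1).
  assert (HK : 0 <= K) by (apply fsum_nonneg; intros; apply Cmod_ge_0).
  destruct (archimed (K / t)) as [Har _].
  set (j := Z.to_nat (up (K / t))).
  assert (Hj : K / t < INR j).
  { unfold j. rewrite INR_IZR_INZ. rewrite Z2Nat.id. auto.
    apply le_IZR. assert (0 <= K / t) by (apply Rmult_le_pos; [lra|left; apply Rinv_0_lt_compat; unfold t; lra]). lra. }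
  pose proof (chi_bounded (n ^ Z.of_nat j)%Z) as Hb. fold K in Hb.
  rewrite chi_mult_pow, Cmod_pow in Hb.
  pose proof (bernoulli t j ltac:(unfold t; lra)).
  replace (1 + t) with (Cmod (chi n)) in H0 by (unfold t; ring).
  assert (INR j * t > K).
  { apply Rmult_lt_reg_r with (/ t). apply Rinv_0_lt_compat; unfold t; lra.
    rewrite Rmult_assoc, Rinv_r by (unfold t; lra). unfold Rdiv in Hj. lra. }
  lra.
Qed.

Lemma chi_q_ge2 : nontrivial_char chi -> (2 <= q)%nat.
Proof.
  intros [n [Hn0 Hn1]]. destruct Hc as [Hq [H1 _]].
  destruct (Nat.eq_dec q 1) as [E|E]; [|lia]. exfalso. apply Hn1.
  rewrite chi_mod. rewrite E. simpl Z.of_nat. rewrite Z.mod_1_r.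
  rewrite <- H1. rewrite (chi_mod 1). rewrite E. reflexivity.
Qed.

End Char.

Lemma e_add w1 w2 : e (w1 + w2)%C = (e w1 * e w2)%C.
Proof.
  destruct w1 as [a b], w2 as [c d]. unfold e, Cmult. simpl.
  replace (-2 * PI * (b + d)) with (-2 * PI * b + -2 * PI * d) by ring.
  replace (2 * PI * (a + c)) with (2 * PI * a + 2 * PI * c) by ring.
  rewrite exp_plus, cos_plus, sin_plus. f_equal; ring.
Qed.

Lemma e_0 : e 0%C = 1%C.
Proof. unfold e. apply injective_projections; simpl; rewrite !Rmult_0_r, exp_0; [rewrite cos_0|rewrite sin_0]; ring. Qed.

Lemma e_nat (w : C) (B : nat) : e (RtoC (INR B) * w)%C = Cpow (e w) B.
Proof.
  induction B. simpl. replace (RtoC 0 * w)%C with (RtoC 0) by (apply injective_projections; simpl; ring). apply e_0.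
  rewrite S_INR. replace (RtoC (INR B + 1) * w)%C with (RtoC (INR B) * w + w)%C
    by (apply injective_projections; simpl; ring).
  rewrite e_add, IHB. simpl. ring.
Qed.

Lemma Cmod_e w : Cmod (e w) = exp (-2 * PI * Im w).
Proof.
  unfold e, Cmod. cbn [fst snd].
  set (r := exp (-2 * PI * Im w)). set (u := 2 * PI * Re w).
  replace ((r * cos u) ^ 2 + (r * sin u) ^ 2) with (r ^ 2).
  - apply sqrt_pow2. left; apply exp_pos.
  - pose proof (sin2_cos2 u). unfold Rsqr in H. 
    replace ((r * cos u) ^ 2 + (r * sin u) ^ 2) with (r ^ 2 * (sin u * sin u + cos u * cos u)) by ring.
    rewrite H. ring.
Qed.

Lemma sum_n_Re (f : nat -> C) N : Re (sum_n f N) = sum_n (fun i => Re (f i)) N.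
Proof. induction N. rewrite !sum_O. auto. rewrite !sum_Sn. rewrite <- IHN. reflexivity. Qed.

Lemma sum_n_Im (f : nat -> C) N : Im (sum_n f N) = sum_n (fun i => Im (f i)) N.
Proof. induction N. rewrite !sum_O. auto. rewrite !sum_Sn. rewrite <- IHN. reflexivity. Qed.

Lemma is_series_C_parts (f : nat -> C) (l : C) : is_series f l ->
  is_series (fun i => Re (f i)) (Re l) /\ is_series (fun i => Im (f i)) (Im l).
Proof.
  intros H. unfold is_series in *. pose proof (proj1 (filterlim_locally (F:=eventually) _ _) H) as H'. clear H.
  split; apply (filterlim_locally (F:=eventually)); intros eps; specialize (H' eps) as H;
  (eapply filter_imp; [|exact H]); intros N [H1 H2].
  - rewrite <- sum_n_Re. exact H1.
  - rewrite <- sum_n_Im. exact H2.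
Qed.

Lemma CSeries_is (f : nat -> C) (l : C) : is_series f l -> CSeries f = l.
Proof.
  intros H. destruct (is_series_C_parts f l H) as [H1 H2]. unfold CSeries.
  rewrite (is_series_unique _ _ H1), (is_series_unique _ _ H2). destruct l; reflexivity.
Qed.

Lemma Cmod_sum_n (f : nat -> C) N : Cmod (sum_n f N) <= sum_n (fun i => Cmod (f i)) N.
Proof.
  induction N. rewrite !sum_O. lra. rewrite !sum_Sn.
  eapply Rle_trans. apply Cmod_triangle. change (plus (sum_n (fun i => Cmod (f i)) N) (Cmod (f (S N))))
    with (sum_n (fun i => Cmod (f i)) N + Cmod (f (S N))). lra.
Qed.

Lemma Cmod_series_le (f : nat -> C) (l : C) (L : R) : is_series f l ->
  (forall N, Cmod (sum_n f N) <= L) -> Cmod l <= L.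
Proof.
  intros H HB. destruct (Rle_lt_dec (Cmod l) L) as [|Hlt]; auto. exfalso.
  unfold is_series in H. pose proof (proj1 (@filterlim_locally_ball_norm C_AbsRing _ C_NormedModule eventually _ _ _) H) as H'. clear H. rename H' into H.
  assert (He : 0 < Cmod l - L) by lra.
  destruct (H (mkposreal _ He)) as [N0 HN0]. specialize (HN0 N0 (le_n _)).
  unfold ball_norm in HN0. change (Cmod (minus (sum_n f N0) l) < Cmod l - L) in HN0.
  specialize (HB N0).
  assert (Cmod l <= Cmod (sum_n f N0) + Cmod (minus (sum_n f N0) l)).
  { replace l with (sum_n f N0 - minus (sum_n f N0) l)%C at 1.
    eapply Rle_trans. apply Cmod_triangle. rewrite Cmod_opp. lra.
    unfold minus, plus, opp. simpl. apply injective_projections; simpl; ring. }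
  lra.
Qed.

Lemma ex_series_C_le (f : nat -> C) (b : nat -> R) : (forall n, Cmod (f n) <= b n) -> ex_series b ->
  exists l, is_series f l.
Proof.
  intros H Hb. assert (ex_series f).
  { apply (@ex_series_le C_AbsRing C_CompleteNormedModule f b); auto. }
  exact H0.
Qed.

Fixpoint deg (j : nat) (p : R -> R) : Prop :=
  match j with
  | O => forall x, p x = 0
  | S j => forall h, deg j (fun x => p x - p (x - h))
  end.

Lemma deg_ext j : forall p r, (forall x, p x = r x) -> deg j p -> deg j r.
Proof.
  induction j; simpl; intros p r E H.
  - intros x. rewrite <- E. auto.
  - intros h. apply (IHj (fun x => p x - p (x - h))); auto. intros x. rewrite !E. auto.
Qed.

Lemma deg_plus j : forall p r, deg j p -> deg j r -> deg j (fun x => p x + r x).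
Proof.
  induction j; simpl; intros p r Hp Hr.
  - intros x. rewrite Hp, Hr. ring.
  - intros h. eapply deg_ext; [|apply (IHj _ _ (Hp h) (Hr h))]. intros x; simpl; ring.
Qed.

Lemma deg_scal j : forall a p, deg j p -> deg j (fun x => a * p x).
Proof.
  induction j; simpl; intros a p Hp.
  - intros x. rewrite Hp. ring.
  - intros h. eapply deg_ext; [|apply (IHj a _ (Hp h))]. intros x; simpl; ring.
Qed.

Lemma deg_mono j : forall p, deg j p -> deg (S j) p.
Proof.
  induction j; simpl; intros p Hp.
  - intros h x. rewrite !Hp. ring.
  - intros h. apply IHj. apply Hp.
Qed.

Lemma deg_mono_le i j p : (i <= j)%nat -> deg i p -> deg j p.
Proof. induction 1; auto. intros. apply deg_mono; auto. Qed.

Lemma deg_sum j (f : nat -> R -> R) n : (forall i, (i <= n)%nat -> deg j (f i)) ->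
  deg j (fun x => sum_f_R0 (fun i => f i x) n).
Proof.
  induction n; intros H; simpl.
  - apply H; lia.
  - apply deg_plus. apply IHn; intros; apply H; lia. apply H; lia.
Qed.

Lemma Cnn n : Binomial.C n n = 1.
Proof. unfold Binomial.C. rewrite Nat.sub_diag. simpl fact. rewrite Rmult_1_r. apply Rinv_r_simpl_r || (field; apply INR_fact_neq_0). Qed.

Lemma deg_pow m : deg (S m) (fun y => y ^ m).
Proof.
  induction m as [m IH] using lt_wf_ind.
  destruct m as [|m'].
  - simpl. intros h x. ring.
  - intro h. change (deg (S m') (fun x => x ^ S m' - (x - h) ^ S m')).
    apply (deg_ext _ (fun y => -1 * sum_f_R0 (fun i => Binomial.C (S m') i * (- h) ^ (S m' - i) * y ^ i) m')).
    + intros y. rewrite (Rminus_def y h), binomial, tech5, Cnn, Nat.sub_diag, pow_O.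
      rewrite (sum_eq (fun i => Binomial.C (S m') i * y ^ i * (- h) ^ (S m' - i))
                      (fun i => Binomial.C (S m') i * (- h) ^ (S m' - i) * y ^ i)) by (intros; ring).
      ring.
    + apply deg_scal. apply deg_sum. intros i Hi.
      apply deg_scal. apply deg_mono_le with (S i). lia. apply IH. lia.
Qed.

Lemma shift_series (a : nat -> C) (l : C) : is_series a l -> forall q : nat,
  is_series (fun B => if (q <=? B)%nat then a (B - q)%nat else (RtoC 0)) l.
Proof.
  intros H q. induction q.
  - eapply is_series_ext; [|exact H]. intros n. simpl. rewrite Nat.sub_0_r. auto.
  - apply is_series_decr_1.
    match goal with |- is_series _ ?L => replace L with l end.
    + eapply is_series_ext; [|exact IHq]. intros n. simpl. auto.
    + unfold plus, opp; simpl. apply injective_projections; simpl; ring.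
Qed.

Lemma sum_n_const_after (w : nat -> C) L : (forall B, (L < B)%nat -> w B = (RtoC 0)) ->
  forall N, (L <= N)%nat -> sum_n w N = sum_n w L.
Proof.
  intros H N HN. induction HN; auto. rewrite sum_Sn, IHHN, H by lia.
  unfold plus; simpl. apply injective_projections; simpl; ring.
Qed.

Lemma finite_series (w : nat -> C) L : (forall B, (L < B)%nat -> w B = (RtoC 0)) -> is_series w (sum_n w L).
Proof.
  intros H. unfold is_series.
  apply (proj2 (@filterlim_locally_ball_norm C_AbsRing _ C_NormedModule eventually _ _ _)).
  intros eps. exists L. intros N HN. cbv beta. unfold ball_norm. match goal with |- context [@sum_n ?G ?ww N] => assert (E : @sum_n G ww N = @sum_n G ww L) by (apply (sum_n_const_after w L H N HN)); rewrite E end.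
  change (Cmod (minus (sum_n w L) (sum_n w L)) < eps).
  replace (minus (sum_n w L) (sum_n w L)) with (RtoC 0).
  rewrite Cmod_0. apply cond_pos.
  unfold minus, plus, opp; simpl. apply injective_projections; simpl; ring.
Qed.

Lemma is_series_unique_C (w : nat -> C) l1 l2 : is_series w l1 -> is_series w l2 -> l1 = l2.
Proof.
  intros H1 H2. apply (filterlim_locally_unique (F := eventually) (sum_n w)); auto.
Qed.

Lemma sum_n_R_le (a b : nat -> R) N : (forall i, (i <= N)%nat -> a i <= b i) -> sum_n a N <= sum_n b N.
Proof.
  induction N; intros H. rewrite !sum_O. apply H; lia.
  rewrite !sum_Sn. change (sum_n a N + a (S N) <= sum_n b N + b (S N)).
  assert (sum_n a N <= sum_n b N) by (apply IHN; intros; apply H; lia).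
  assert (a (S N) <= b (S N)) by (apply H; lia). lra.
Qed.

Lemma sum_n_R_scal (a : nat -> R) (c : R) N : sum_n (fun i => a i * c) N = sum_n a N * c.
Proof. induction N. rewrite !sum_O. auto. rewrite !sum_Sn, IHN. change ((sum_n a N * c) + a (S N) * c = (sum_n a N + a (S N)) * c). ring. Qed.

Lemma sum_n_R_nonneg (a : nat -> R) N : (forall i, 0 <= a i) -> 0 <= sum_n a N.
Proof. intros H. induction N. rewrite sum_O; auto. rewrite sum_Sn. change (0 <= sum_n a N + a (S N)). pose proof (H (S N)). lra. Qed.

Section Inner.
Variables (q : nat) (c : Z -> C).
Hypothesis Hq : (1 <= q)%nat.
Hypothesis Hper : forall n, c (n + Z.of_nat q)%Z = c n.

Definition cls_u (j : nat) (u : nat -> C) : Prop :=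
  u 0%nat = (RtoC 0) /\ exists L p, deg j p /\ forall B, (L <= B)%nat -> u B = (c (Z.of_nat B) * RtoC (p (INR B)))%C.

Lemma Cmod_1_minus_pos (x : C) : Cmod x < 1 -> 0 < Cmod (1 - Cpow x q)%C.
Proof.
  intros Hx. apply Cmod_gt_0. intro H.
  assert (E : Cpow x q = 1%C).
  { replace (Cpow x q) with (1 - (1 - Cpow x q))%C by ring. rewrite H. ring. }
  assert (Cmod (Cpow x q) < 1).
  { rewrite Cmod_pow. destruct q; [lia|]. simpl.
    pose proof (Cmod_ge_0 x). pose proof (pow_le (Cmod x) n H0).
    assert (Cmod x ^ n <= 1). { apply pow_le1_compat || (clear -Hx H0; induction n; simpl; nra). }
    nra. }
  rewrite E, Cmod_1 in H0. lra.
Qed.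

Lemma key_ind : forall j u, cls_u j u -> exists C0, 0 <= C0 /\ forall x l, Cmod x < 1 ->
  is_series (fun B => (u B * Cpow x B)%C) l -> Cmod l <= C0 * Cmod x / Cmod (1 - Cpow x q)%C ^ j.
Proof.
  induction j as [|j IH]; intros u [Hu0 [L [p [Hp HuL]]]].
  - exists (sum_n (fun B => Cmod (u B)) L). split.
    { apply sum_n_R_nonneg. intros; apply Cmod_ge_0. }
    intros x l Hx Hs.
    assert (Hz : forall B, (L < B)%nat -> (u B * Cpow x B)%C = (RtoC 0)).
    { intros B HB. rewrite HuL by lia. simpl in Hp. rewrite Hp. ring. }
    pose proof (finite_series _ L Hz) as Hf.
    rewrite (is_series_unique_C _ _ _ Hs Hf).
    simpl pow. rewrite Rdiv_1_r.
    eapply Rle_trans. apply Cmod_sum_n.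
    rewrite <- sum_n_R_scal. apply sum_n_R_le. intros i Hi.
    rewrite Cmod_mult, Cmod_pow. destruct i.
    + rewrite Hu0, Cmod_0. pose proof (Cmod_ge_0 x). nra.
    + apply Rmult_le_compat_l. apply Cmod_ge_0.
      simpl. pose proof (Cmod_ge_0 x).
      assert (Cmod x ^ i <= 1) by (clear -Hx H; induction i; simpl; nra). nra.
  - set (v := fun B => (u B - (if (q <=? B)%nat then u (B - q)%nat else 0))%C).
    assert (Hv : cls_u j v).
    { split.
      - unfold v. rewrite Hu0. destruct (Nat.leb_spec q 0); [lia|]. ring.
      - exists (L + q)%nat, (fun y => p y - p (y - INR q)). split.
        + apply Hp.
        + intros B HB. unfold v. destruct (Nat.leb_spec q B); [|lia].
          rewrite !HuL by lia. rewrite minus_INR by lia.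
          replace (c (Z.of_nat (B - q))) with (c (Z.of_nat B)).
          * rewrite RtoC_minus. ring.
          * replace (Z.of_nat B) with (Z.of_nat (B - q) + Z.of_nat q)%Z by lia. rewrite Hper. reflexivity. }
    destruct (IH v Hv) as [C0 [HC0 Hb]].
    exists C0. split; auto. intros x l Hx Hs.
    assert (Hs2 : is_series (fun B => (v B * Cpow x B)%C) ((1 - Cpow x q) * l)%C).
    { pose proof (is_series_scal (K := C_AbsRing) (Cpow x q) _ _ (shift_series _ _ Hs q)) as H2.
      pose proof (is_series_minus _ _ _ _ Hs H2) as H3.
      replace ((1 - Cpow x q) * l)%C with (plus l (opp (scal (Cpow x q) l))).
      - eapply is_series_ext; [|exact H3]. intros B. unfold v.
        unfold plus, opp, scal; simpl. change (@mult C_Ring) with Cmult. 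
        destruct (Nat.leb_spec q B).
        + change (@eq C (u B * x ^ B + - (x ^ q * (u (B - q)%nat * x ^ (B - q))))%C ((u B - u (B - q)%nat) * x ^ B)%C).
          replace (x ^ B)%C with (x ^ q * x ^ (B - q))%C. ring.
          rewrite <- Cpow_add_r. f_equal. lia. 
        + change (@eq C (u B * x ^ B + - (x ^ q * RtoC 0))%C ((u B - RtoC 0) * x ^ B)%C). ring.
      - unfold plus, opp, scal; simpl. change (@mult C_Ring) with Cmult. ring. }
    specialize (Hb x _ Hx Hs2).
    rewrite Cmod_mult in Hb.
    pose proof (Cmod_1_minus_pos x Hx) as Hpos.
    set (D := Cmod (1 - Cpow x q)%C) in *.
    simpl pow. 
    apply Rmult_le_reg_l with D; auto.
    replace (D * (C0 * Cmod x / (D * D ^ j))) with (C0 * Cmod x / D ^ j) by (field; split; [apply pow_nonzero|]; lra).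
    exact Hb.
Qed.

End Inner.

Lemma lim_ratio (m : nat) : is_lim_seq (fun n => ((INR n + 2) / (INR n + 1)) ^ m) 1.
Proof.
  assert (H0 : is_lim_seq (fun n => / (INR n + 1)) 0).
  { assert (H1 : is_lim_seq (fun n => INR n + 1) p_infty).
    { apply is_lim_seq_ext with (fun n => INR (S n)). intros; apply S_INR.
      apply (proj1 (is_lim_seq_incr_1 INR p_infty)). apply is_lim_seq_INR. }
    pose proof (is_lim_seq_inv _ _ H1 ltac:(discriminate)) as H2. simpl in H2. exact H2. }
  assert (H3 : is_lim_seq (fun n => (INR n + 2) / (INR n + 1)) 1).
  { apply is_lim_seq_ext with (fun n => 1 + / (INR n + 1)).
    intros n. pose proof (pos_INR n). field. lra.
    replace (Finite 1) with (Finite (1 + 0)) by (f_equal; ring).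
    apply is_lim_seq_plus'. apply is_lim_seq_const. exact H0. }
  induction m.
  - simpl. apply is_lim_seq_const.
  - simpl. replace (Finite 1) with (Finite (1 * 1)) by (f_equal; ring).
    apply is_lim_seq_mult'; auto.
Qed.

Lemma ex_series_poly_geom (m : nat) (r : R) : 0 < r < 1 ->
  ex_series (fun n => (INR n + 1) ^ m * r ^ n).
Proof.
  intros Hr. apply ex_series_Rabs.
  apply ex_series_DAlembert with r. lra.
  - intros n. apply Rmult_integral_contrapositive. split; apply pow_nonzero; pose proof (pos_INR n); lra.
  - apply is_lim_seq_ext with (fun n => ((INR n + 2) / (INR n + 1)) ^ m * r).
    + intros n. rewrite S_INR. pose proof (pos_INR n).
      rewrite Rabs_pos_eq.
      * simpl pow at 3. unfold Rdiv. rewrite Rpow_mult_distr, pow_inv.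
        replace (INR n + 1 + 1) with (INR n + 2) by ring. field. split; apply pow_nonzero; lra.
      * apply Rmult_le_pos. apply Rmult_le_pos; apply pow_le; lra. left; apply Rinv_0_lt_compat. apply Rmult_lt_0_compat; apply pow_lt; lra.
    + replace (Finite r) with (Finite (1 * r)) by (f_equal; ring).
      apply is_lim_seq_mult'. apply lim_ratio. apply is_lim_seq_const.
Qed.

Lemma inner_bound (q2 : nat) (chi2 : Z -> C) (m : nat) : is_dirichlet_char q2 chi2 ->
  exists C2, 0 <= C2 /\ forall x : C, 0 < Cmod x < 1 -> exists l,
    is_series (fun j => (Cconj (chi2 (Z.of_nat (S j))) * RtoC (INR (S j) ^ m) * Cpow x (S j))%C) l /\
    Cmod l <= C2 * Cmod x / Cmod (1 - Cpow x q2)%C ^ (S m).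
Proof.
  intros Hc.
  assert (Hq : (1 <= q2)%nat) by (destruct Hc; lia).
  set (c := fun n => Cconj (chi2 n)).
  assert (Hper : forall n, c (n + Z.of_nat q2)%Z = c n).
  { intros n. unfold c. destruct Hc as [_ [_ [_ [Hp _]]]]. rewrite Hp. auto. }
  set (u := fun B => if (B =? 0)%nat then RtoC 0 else (c (Z.of_nat B) * RtoC (INR B ^ m))%C).
  assert (Hu : cls_u c (S m) u).
  { split. reflexivity. exists 1%nat, (fun y => y ^ m). split. apply deg_pow.
    intros B HB. unfold u. destruct (Nat.eqb_spec B 0). lia. reflexivity. }
  destruct (key_ind q2 c Hq Hper (S m) u Hu) as [C0 [HC0 Hb]].
  exists C0. split; auto. intros x Hx.
  set (f := fun j => (Cconj (chi2 (Z.of_nat (S j))) * RtoC (INR (S j) ^ m) * Cpow x (S j))%C).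
  assert (Hex : exists l, is_series f l).
  { apply ex_series_C_le with (fun n => (INR n + 1) ^ m * Cmod x ^ n).
    - intros n. unfold f. rewrite !Cmod_mult, Cmod_conj, Cmod_R, Cmod_pow.
      pose proof (chi_le_1 q2 chi2 Hc (Z.of_nat (S n))).
      rewrite Rabs_pos_eq by (apply pow_le, pos_INR).
      rewrite S_INR. simpl pow at 2.
      assert (0 <= (INR n + 1) ^ m) by (apply pow_le; pose proof (pos_INR n); lra).
      assert (0 <= Cmod x ^ n) by (apply pow_le, Cmod_ge_0).
      assert (Cmod x * Cmod x ^ n <= Cmod x ^ n) by nra.
      pose proof (Cmod_ge_0 (chi2 (Z.of_nat (S n)))).
      apply Rle_trans with (1 * (INR n + 1) ^ m * (Cmod x * Cmod x ^ n)).
      + apply Rmult_le_compat_r. pose proof (Cmod_ge_0 x). nra. apply Rmult_le_compat_r; auto.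
      + nra.
    - apply ex_series_poly_geom; auto. }
  destruct Hex as [l Hl]. exists l. split; auto.
  apply Hb. lra.
  apply is_series_decr_1.
  match goal with |- is_series _ ?L => replace L with l end.
  - eapply is_series_ext; [|exact Hl]. intros n. unfold f, u, c. simpl Nat.eqb. cbv iota. reflexivity.
  - unfold u. simpl. unfold plus, opp. simpl. apply injective_projections; simpl; ring.
Qed.

Lemma Cmod_sq (z : C) : Cmod z ^ 2 = Re z ^ 2 + Im z ^ 2.
Proof. unfold Cmod. rewrite pow2_sqrt. reflexivity. pose proof (pow2_ge_0 (fst z)). pose proof (pow2_ge_0 (snd z)). simpl. lra. Qed.

Lemma one_minus_e_sq (w : C) :
  4 * exp (-2 * PI * Im w) * sin (PI * Re w) ^ 2 <= Cmod (1 - e w)%C ^ 2.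
Proof.
  rewrite Cmod_sq. unfold e. cbn [Re Im fst snd RtoC Cminus Cplus Copp].
  set (r := exp (-2 * PI * Im w)). set (u := PI * Re w).
  replace (2 * PI * Re w) with (2 * u) by (unfold u; ring).
  rewrite cos_2a_sin. rewrite sin_2a.
  assert (Hc : cos u * cos u = 1 - sin u * sin u) by (pose proof (sin2_cos2 u); unfold Rsqr in H; lra).
  assert (0 < r) by apply exp_pos.
  match goal with |- _ <= ?R => replace R
    with ((1 - r) ^ 2 + 4 * r * sin u ^ 2 + 4 * r * r * sin u ^ 2 * (cos u * cos u - (1 - sin u * sin u))) by ring end.
  rewrite Hc. replace (1 - sin u * sin u - (1 - sin u * sin u)) with 0 by ring.
  assert (0 <= (1 - r) ^ 2) by apply pow2_ge_0.
  nra.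
Qed.

Lemma one_minus_e_ge (w : C) : 1 - exp (-2 * PI * Im w) <= Cmod (1 - e w)%C.
Proof.
  rewrite <- Cmod_e. pose proof (Cmod_triangle (1 - e w)%C (e w)).
  replace (1 - e w + e w)%C with (RtoC 1) in H by ring. rewrite Cmod_1 in H. lra.
Qed.

Lemma sin_sq_shift (x : R) (k : Z) : sin (x + IZR k * PI) ^ 2 = sin x ^ 2.
Proof.
  rewrite sin_plus. rewrite (sin_eq_0_1 (IZR k * PI)) by (exists k; auto).
  assert (cos (IZR k * PI) ^ 2 = 1).
  { pose proof (sin2_cos2 (IZR k * PI)). rewrite (sin_eq_0_1 (IZR k * PI)) in H by (exists k; auto).
    unfold Rsqr in H. lra. }
  replace ((sin x * cos (IZR k * PI) + cos x * 0) ^ 2) with (sin x ^ 2 * cos (IZR k * PI) ^ 2) by ring.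
  rewrite H. ring.
Qed.

Lemma sin_lower (y : R) : 0 <= y <= PI / 2 -> y / 3 <= sin y.
Proof.
  intros Hy. pose proof PI2_3_2. pose proof PI_4.
  assert (HyP : y <= PI) by lra.
  destruct (SIN y ltac:(lra) HyP) as [Hl _].
  assert (E : sin_lb y = y - y ^ 3 / 6 + y ^ 5 / 120 - y ^ 7 / 5040).
  { unfold sin_lb, sin_approx, sin_term. simpl. field. }
  rewrite E in Hl.
  assert (y <= 2) by lra.
  assert (y ^ 2 <= 4) by nra.
  assert (0 <= y) by lra.
  set (t := y ^ 2) in *.
  assert (G1 : 0 <= 2 / 3 - t / 6) by lra.
  assert (G2 : 0 <= t ^ 2 * (1 / 120 - t / 5040)) by (apply Rmult_le_pos; [apply pow2_ge_0|]; unfold t; nra).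
  assert (G3 : 0 <= y * ((2 / 3 - t / 6) + t ^ 2 * (1 / 120 - t / 5040))) by (apply Rmult_le_pos; lra).
  assert (E2 : y - y ^ 3 / 6 + y ^ 5 / 120 - y ^ 7 / 5040 - y / 3 = y * ((2 / 3 - t / 6) + t ^ 2 * (1 / 120 - t / 5040))) by (unfold t; field).
  lra.
Qed.

Lemma sin_sq_mod (t N : Z) : (0 < N)%Z ->
  sin (PI * IZR t / IZR N) ^ 2 = sin (PI * IZR (t mod N) / IZR N) ^ 2.
Proof.
  intros HN. rewrite <- (sin_sq_shift (PI * IZR (t mod N) / IZR N) (t / N)).
  f_equal. f_equal.
  assert (E : (t = N * (t / N) + t mod N)%Z) by (apply Z.div_mod; lia).
  assert (IZR N <> 0) by (apply not_0_IZR; lia).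
  rewrite E at 1. rewrite plus_IZR, mult_IZR. field. auto.
Qed.

Lemma sin_sq_refl (r N : Z) : (0 < N)%Z ->
  sin (PI * IZR (N - r) / IZR N) ^ 2 = sin (PI * IZR r / IZR N) ^ 2.
Proof.
  intros HN. assert (IZR N <> 0) by (apply not_0_IZR; lia).
  replace (PI * IZR (N - r) / IZR N) with (- (PI * IZR r / IZR N) + IZR 1 * PI)
    by (rewrite minus_IZR; field; auto).
  rewrite sin_sq_shift, sin_neg. ring.
Qed.

Lemma sin_del (d N : Z) (A : nat) (s : Z) : (2 <= N)%Z -> Z.gcd d N = 1%Z ->
  (1 <= A)%nat -> (Z.of_nat A < N)%Z -> (s = d \/ s = - d)%Z ->
  (IZR (del d N A) / IZR N) ^ 2 <= sin (PI * IZR (Z.of_nat A * s) / IZR N) ^ 2.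
Proof.
  intros HN Hg H1 H2 Hs.
  pose proof (rr_pos d N HN Hg A H1 H2) as Hr. pose proof (rr_spec d N HN A) as [_ Hr2].
  pose proof (del_bounds d N HN Hg A H1 H2) as [Hd1 Hd2].
  assert (E1 : sin (PI * IZR (Z.of_nat A * s) / IZR N) ^ 2 = sin (PI * IZR (rr d N A) / IZR N) ^ 2).
  { rewrite sin_sq_mod by lia. destruct Hs as [Hs|Hs]; subst s.
    - reflexivity.
    - replace (Z.of_nat A * - d)%Z with (- (Z.of_nat A * d))%Z by ring.
      rewrite Z_mod_nz_opp_full. fold (rr d N (A)). unfold rr. apply sin_sq_refl. lia.
      fold (rr d N A). lia. }
  assert (E2 : sin (PI * IZR (rr d N A) / IZR N) ^ 2 = sin (PI * IZR (del d N A) / IZR N) ^ 2).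
  { unfold del. destruct (Z.le_gt_cases (rr d N A) (N - rr d N A)).
    - rewrite Z.min_l by lia. reflexivity.
    - rewrite Z.min_r by lia. rewrite sin_sq_refl by lia. reflexivity. }
  rewrite E1, E2.
  assert (HNr : 2 <= IZR N) by (apply IZR_le; lia).
  assert (HD : 1 <= IZR (del d N A)) by (apply IZR_le; lia).
  assert (HD2 : 2 * IZR (del d N A) <= IZR N) by (rewrite <- mult_IZR; apply IZR_le; lia).
  pose proof PI2_3_2.
  assert (Hy : 0 <= PI * IZR (del d N A) / IZR N <= PI / 2).
  { split. apply Rmult_le_pos. apply Rmult_le_pos; lra. left; apply Rinv_0_lt_compat; lra.
    unfold Rdiv. apply Rmult_le_reg_r with (IZR N). lra.
    rewrite Rmult_assoc, Rinv_l by lra. nra. }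
  pose proof (sin_lower _ Hy).
  assert (IZR (del d N A) / IZR N <= PI * IZR (del d N A) / IZR N / 3).
  { unfold Rdiv. rewrite !Rmult_assoc. rewrite <- (Rmult_comm (/ 3)). rewrite <- !Rmult_assoc.
    apply Rmult_le_compat_r. left; apply Rinv_0_lt_compat; lra. nra. }
  assert (0 <= IZR (del d N A) / IZR N) by (apply Rmult_le_pos; [lra|left; apply Rinv_0_lt_compat; lra]).
  apply pow_incr. lra.
Qed.

Definition mkC (a b : R) : C := (a, b).

Lemma z_parts (A : nat) (sg g : R) : g <> 0 ->
  (RtoC (INR A) * Cdiv (Cplus Ci (RtoC sg)) (RtoC g))%C = mkC (INR A * sg / g) (INR A / g).
Proof.
  intros Hg. unfold Cdiv, Cinv, Cmult, Cplus, Ci, RtoC. simpl.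
  apply injective_projections; simpl; field; auto.
Qed.

Lemma e_pow_parts (A q : nat) (a b : R) :
  Cpow (e (mkC a b)) q = e (mkC (INR q * a) (INR q * b)).
Proof.
  rewrite <- e_nat. f_equal. apply injective_projections; simpl; ring.
Qed.

Lemma Cmod_e_parts (a b : R) : Cmod (e (mkC a b)) = exp (-2 * PI * b).
Proof. rewrite Cmod_e. reflexivity. Qed.

Lemma one_minus_X_small (d N : Z) (A : nat) (s : Z) : (2 <= N)%Z -> Z.gcd d N = 1%Z ->
  (1 <= A)%nat -> (Z.of_nat A < N)%Z -> (s = d \/ s = - d)%Z ->
  2 * exp (- PI) * (IZR (del d N A) / IZR N) <= Cmod (1 - e (mkC (INR A * IZR s / IZR N) (INR A / IZR N)))%C.
Proof.
  intros HN Hg H1 H2 Hs.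
  pose proof (one_minus_e_sq (INR A * IZR s / IZR N, INR A / IZR N)) as Hsq. unfold mkC in Hsq. cbn [Re Im fst snd] in Hsq.
  pose proof (sin_del d N A s HN Hg H1 H2 Hs) as Hsd.
  rewrite mult_IZR, <- INR_IZR_INZ in Hsd.
  replace (PI * (INR A * IZR s / IZR N)) with (PI * (INR A * IZR s) / IZR N) in Hsq by (unfold Rdiv; ring).
  assert (HNr : 2 <= IZR N) by (apply IZR_le; lia).
  assert (HA : INR A < IZR N) by (rewrite INR_IZR_INZ; apply IZR_lt; auto).
  assert (Hex : exp (-2 * PI) <= exp (-2 * PI * (INR A / IZR N))).
  { apply exp_le_3 || idtac. destruct (Req_dec (INR A / IZR N) 1) as [E|E].
    - rewrite E, Rmult_1_r. lra.
    - left. apply exp_increasing. pose proof PI_RGT_0.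
      assert (INR A / IZR N < 1) by (apply Rmult_lt_reg_r with (IZR N); [lra|]; unfold Rdiv; rewrite Rmult_assoc, Rinv_l by lra; lra).
      assert (0 <= INR A / IZR N) by (apply Rmult_le_pos; [apply pos_INR|left; apply Rinv_0_lt_compat; lra]).
      nra. }
  set (D := IZR (del d N A) / IZR N) in *.
  set (S2 := sin (PI * (INR A * IZR s) / IZR N) ^ 2) in *.
  assert (HD : 0 <= D).
  { unfold D. apply Rmult_le_pos. apply IZR_le. pose proof (del_bounds d N HN Hg A H1 H2). lia. left; apply Rinv_0_lt_compat; lra. }
  assert (Hsq2 : (2 * exp (- PI) * D) ^ 2 <= Cmod (1 - e (mkC (INR A * IZR s / IZR N) (INR A / IZR N)))%C ^ 2).
  { replace ((2 * exp (- PI) * D) ^ 2) with (4 * exp (-2 * PI) * D ^ 2).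
    - eapply Rle_trans; [|exact Hsq]. apply Rmult_le_compat. 
      + pose proof (exp_pos (-2 * PI)). lra.
      + apply pow2_ge_0.
      + apply Rmult_le_compat_l; lra.
      + exact Hsd.
    - replace (-2 * PI) with (- PI + - PI) by ring. rewrite exp_plus. ring. }
  assert (0 <= 2 * exp (- PI) * D) by (pose proof (exp_pos (- PI)); nra).
  pose proof (Cmod_ge_0 (1 - e (mkC (INR A * IZR s / IZR N) (INR A / IZR N)))%C).
  nra.
Qed.

Lemma one_minus_X_large (N : Z) (A : nat) (a : R) : (1 <= N)%Z -> (N <= Z.of_nat A)%Z ->
  / 2 <= Cmod (1 - e (mkC a (INR A / IZR N)))%C.
Proof.
  intros HN HA. eapply Rle_trans; [|apply one_minus_e_ge]. unfold mkC. cbn [Im snd].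
  assert (HNr : 1 <= IZR N) by (apply IZR_le; lia).
  assert (HAr : IZR N <= INR A) by (rewrite INR_IZR_INZ; apply IZR_le; auto).
  assert (1 <= INR A / IZR N) by (apply Rmult_le_reg_r with (IZR N); [lra|]; unfold Rdiv; rewrite Rmult_assoc, Rinv_l by lra; lra).
  pose proof PI_RGT_0.
  assert (exp (-2 * PI * (INR A / IZR N)) <= exp (-2 * PI)).
  { destruct (Req_dec (INR A / IZR N) 1) as [E|E]. rewrite E, Rmult_1_r; lra.
    left. apply exp_increasing. nra. }
  assert (exp (-2 * PI) <= / 2).
  { pose proof PI2_3_2. pose proof (exp_ineq1 (2 * PI) ltac:(lra)). replace (-2 * PI) with (- (2 * PI)) by ring. rewrite exp_Ropp.
    apply Rinv_le_contravar; lra. }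
  lra.
Qed.

Lemma one_minus_X_any (N : Z) (A : nat) (a : R) : (1 <= N)%Z -> (1 <= A)%nat ->
  1 - exp (-2 * PI / IZR N) <= Cmod (1 - e (mkC a (INR A / IZR N)))%C.
Proof.
  intros HN HA. eapply Rle_trans; [|apply one_minus_e_ge]. unfold mkC. cbn [Im snd].
  assert (HNr : 1 <= IZR N) by (apply IZR_le; lia).
  assert (1 <= INR A) by (apply (le_INR 1); lia).
  pose proof PI_RGT_0.
  assert (exp (-2 * PI * (INR A / IZR N)) <= exp (-2 * PI / IZR N)).
  { destruct (Rle_lt_or_eq_dec 1 (INR A) H) as [Hlt|E]. 
    - left. apply exp_increasing. unfold Rdiv. 
      assert (0 < PI * / IZR N) by (apply Rmult_lt_0_compat; [lra|apply Rinv_0_lt_compat; lra]). nra.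
    - rewrite <- E. unfold Rdiv; rewrite Rmult_1_l. lra. }
  lra.
Qed.

Lemma exp_nat (t : R) (A : nat) : exp (INR A * t) = exp t ^ A.
Proof.
  induction A. simpl. rewrite Rmult_0_l, exp_0. auto.
  rewrite S_INR, Rmult_plus_distr_r, Rmult_1_l, exp_plus, IHA. simpl. ring.
Qed.

Lemma geom_fsum (r : R) N : 0 <= r < 1 -> fsum (fun A => r ^ A) N <= / (1 - r).
Proof.
  intros Hr. assert (E : fsum (fun A => r ^ A) N = (1 - r ^ N) / (1 - r)).
  { induction N. simpl. field. lra. simpl fsum. rewrite IHN. simpl. field. lra. }
  rewrite E. unfold Rdiv. rewrite <- (Rmult_1_l (/ (1 - r))) at 2.
  apply Rmult_le_compat_r. left; apply Rinv_0_lt_compat; lra.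
  pose proof (pow_le r N ltac:(lra)). lra.
Qed.

Lemma fsum_trunc (f : nat -> R) (L N : nat) : (forall A, (L <= A)%nat -> f A = 0) -> (forall A, 0 <= f A) ->
  fsum f N <= fsum f L.
Proof.
  intros Hz Hp. destruct (Nat.le_gt_cases N L).
  - apply fsum_mono; auto.
  - replace N with (L + (N - L))%nat by lia. rewrite fsum_add.
    rewrite (fsum_ext (fun j => f (L + j)%nat) (fun _ => 0)). rewrite fsum_zero. lra.
    intros i Hi. apply Hz. lia.
Qed.

Lemma fsum_S (f : nat -> R) n : fsum f (S n) = fsum f n + f n.
Proof. reflexivity. Qed.

Lemma sum_n_fsum (h : nat -> R) N :
  sum_n (fun i => h (S i)) N = fsum (fun A => if (1 <=? A)%nat then h A else 0) (S (S N)).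
Proof.
  induction N.
  - rewrite sum_O. simpl. ring.
  - rewrite sum_Sn, IHN. change (plus ?a ?b) with (a + b). 
    rewrite (fsum_S _ (S (S N))). f_equal.
Qed.

Lemma inv_exp_bound (g : R) : 1 <= g -> / (1 - exp (-2 * PI / g)) <= 1 + g.
Proof.
  intros Hg. pose proof PI_RGT_0 as HP. pose proof PI2_3_2.
  set (t := 2 * PI / g).
  assert (Ht : 0 < t) by (unfold t; apply Rdiv_lt_0_compat; lra).
  replace (-2 * PI / g) with (- t) by (unfold t; field; lra).
  rewrite exp_Ropp. pose proof (exp_ineq1 t ltac:(lra)).
  assert (0 < exp t) by apply exp_pos.
  replace (1 - / exp t) with ((exp t - 1) / exp t) by (field; lra).
  rewrite Rinv_div. 
  apply Rle_trans with (1 + / t).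
  - unfold Rdiv. apply Rmult_le_reg_r with (exp t - 1). lra.
    rewrite Rmult_assoc, Rinv_l by lra. rewrite Rmult_1_r.
    assert (t * (exp t - 1) >= t * t) by nra.
    apply Rmult_le_reg_l with t. auto.
    replace (t * ((1 + / t) * (exp t - 1))) with ((t + 1) * (exp t - 1)) by (field; lra).
    nra.
  - unfold t. rewrite Rinv_div. assert (g / (2 * PI) <= g) by (unfold Rdiv; apply Rmult_le_reg_r with (2 * PI); [lra|]; rewrite Rmult_assoc, Rinv_l by lra; nra).
    lra.
Qed.

Section Main.
Variables (q1 q2 : nat) (chi1 chi2 : Z -> C) (k n m : nat) (C2 : R).
Hypothesis Hc1 : is_dirichlet_char q1 chi1.
Hypothesis Hq2 : (1 <= q2)%nat.
Hypothesis Hm : (k - n - 2 = m)%nat.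
Hypothesis HC2 : 0 <= C2.
Hypothesis Hinner : forall x : C, 0 < Cmod x < 1 -> exists l,
    is_series (fun j => (Cconj (chi2 (Z.of_nat (S j))) * RtoC (INR (S j) ^ m) * Cpow x (S j))%C) l /\
    Cmod l <= C2 * Cmod x / Cmod (1 - Cpow x q2)%C ^ (S m).

Definition kap : R := 2 * exp (- PI).
Definition K1 : R := C2 / kap ^ (S m).
Definition K2 : R := C2 * 2 ^ (S m).
Definition Kfin : R := 480 * K1 + 4 * K2 * (1 + INR q2).

Variables (d Nn c s : Z).
Hypothesis HN : (2 <= Nn)%Z.
Hypothesis Hcdef : c = (Z.of_nat q2 * Nn)%Z.
Hypothesis Hg : Z.gcd d Nn = 1%Z.
Hypothesis Hs : (s = d \/ s = - d)%Z.

Let z : C := Cdiv (Cplus Ci (RtoC (IZR s))) (RtoC (IZR c)).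
Let gam : R := IZR c.
Let rho : R := exp (-2 * PI / gam).

Lemma gam_pos : 2 <= gam.
Proof. unfold gam. apply IZR_le. subst c. nia. Qed.

Lemma gam_eq : gam = INR q2 * IZR Nn.
Proof. unfold gam. rewrite Hcdef, mult_IZR, <- INR_IZR_INZ. auto. Qed.

Definition xA (A : nat) : C := e (RtoC (INR A) * z)%C.

Lemma xA_parts A : xA A = e (mkC (INR A * IZR s / gam) (INR A / gam)).
Proof. unfold xA, z. rewrite z_parts. auto. pose proof gam_pos. unfold gam in *. lra. Qed.

Lemma xA_mod A : Cmod (xA A) = rho ^ A.
Proof.
  rewrite xA_parts, Cmod_e_parts. unfold rho. rewrite <- exp_nat. f_equal. field. pose proof gam_pos; lra.
Qed.

Lemma rho_bounds : 0 < rho < 1.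
Proof.
  unfold rho. split. apply exp_pos. rewrite <- exp_0. apply exp_increasing.
  pose proof PI_RGT_0. pose proof gam_pos. unfold Rdiv. 
  assert (0 < / gam) by (apply Rinv_0_lt_compat; lra). nra.
Qed.

Lemma XA_parts A : Cpow (xA A) q2 = e (mkC (INR A * IZR s / IZR Nn) (INR A / IZR Nn)).
Proof.
  rewrite xA_parts. rewrite e_pow_parts by exact O. f_equal. unfold mkC.
  pose proof gam_pos. rewrite gam_eq in *.
  assert (IZR Nn <> 0) by (apply not_0_IZR; lia).
  assert (INR q2 <> 0) by (apply not_0_INR; lia).
  apply injective_projections; simpl; field; auto.
Qed.

Definition inner (A : nat) : nat -> C := fun j =>
  Cmult (Cmult (Cconj (chi2 (Z.of_nat (S j)))) (RtoC (INR (S j) ^ (k - n - 2))))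
        (e (Cmult (RtoC (INR A * INR (S j))) z)).

Lemma inner_ok A : (1 <= A)%nat ->
  is_series (inner A) (CSeries (inner A)) /\
  Cmod (CSeries (inner A)) <= C2 * Cmod (xA A) / Cmod (1 - Cpow (xA A) q2)%C ^ (S m).
Proof.
  intros HA.
  assert (Hx : 0 < Cmod (xA A) < 1).
  { rewrite xA_mod. pose proof rho_bounds. split. apply pow_lt; lra.
    destruct A; [lia|]. simpl. assert (rho ^ A <= 1) by (apply pow_le1_compat || (clear -H; induction A; simpl; nra)). nra. }
  destruct (Hinner (xA A) Hx) as [l [Hl Hb]].
  assert (Hl' : is_series (inner A) l).
  { eapply is_series_ext; [|exact Hl]. intros j. unfold inner. rewrite Hm.
    f_equal. unfold xA. rewrite <- e_nat. f_equal. rewrite RtoC_mult. ring. }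
  rewrite (CSeries_is _ _ Hl'). auto.
Qed.

Definition gterm (i : nat) : C :=
  Cmult (Cdiv (chi1 (Z.of_nat (S i))) (RtoC (INR (S i) ^ (n + 1)))) (CSeries (inner (S i))).

Lemma double_sum_eq : double_sum chi1 chi2 k n z = CSeries gterm.
Proof. reflexivity. Qed.

Definition Tb (A : nat) : R := / INR A ^ (n + 1) * (C2 * Cmod (xA A) / Cmod (1 - Cpow (xA A) q2)%C ^ (S m)).

Lemma gterm_bound i : Cmod (gterm i) <= Tb (S i).
Proof.
  unfold gterm, Tb. destruct (inner_ok (S i) ltac:(lia)) as [_ Hb].
  assert (HA : 0 < INR (S i) ^ (n + 1)) by (apply pow_lt, lt_0_INR; lia).
  rewrite Cmod_mult, Cmod_div. rewrite Cmod_R, Rabs_pos_eq by lra.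
  2:{ intro H. apply RtoC_inj in H. lra. }
  pose proof (chi_le_1 q1 chi1 Hc1 (Z.of_nat (S i))).
  unfold Rdiv. 
  apply Rmult_le_compat.
  - apply Rmult_le_pos. apply Cmod_ge_0. left; apply Rinv_0_lt_compat; auto.
  - apply Cmod_ge_0.
  - assert (0 < / INR (S i) ^ (n + 1)) by (apply Rinv_0_lt_compat; auto). pose proof (Cmod_ge_0 (chi1 (Z.of_nat (S i)))). nra.
  - unfold Rdiv in Hb. exact Hb.
Qed.

Lemma inv_pow_le_inv (A : nat) (j : nat) : (1 <= A)%nat -> / INR A ^ (S j) <= / INR A.
Proof.
  intros HA. assert (1 <= INR A) by (apply (le_INR 1); lia).
  apply Rinv_le_contravar. lra. simpl. rewrite <- (Rmult_1_r (INR A)) at 1.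
  apply Rmult_le_compat_l. lra. apply pow_R1_Rle. lra.
Qed.

Lemma inv_pow_mono (Y Y0 : R) (j : nat) : 0 < Y0 <= Y -> / Y ^ j <= / Y0 ^ j.
Proof.
  intros H. apply Rinv_le_contravar. apply pow_lt; lra. apply pow_incr. lra.
Qed.

Lemma Tb_gen A Y0 : (1 <= A)%nat -> 0 < Y0 -> Y0 <= Cmod (1 - Cpow (xA A) q2)%C ->
  Tb A <= / INR A * (C2 * rho ^ A * / Y0 ^ (S m)).
Proof.
  intros HA HY0 HY. unfold Tb. rewrite xA_mod.
  pose proof rho_bounds.
  replace (n + 1)%nat with (S n) by lia.
  apply Rmult_le_compat.
  - left. apply Rinv_0_lt_compat, pow_lt, lt_0_INR; lia.
  - unfold Rdiv. apply Rmult_le_pos. apply Rmult_le_pos; auto. apply pow_le; lra.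
    left. apply Rinv_0_lt_compat, pow_lt. lra.
  - apply inv_pow_le_inv; auto.
  - unfold Rdiv. apply Rmult_le_compat_l. apply Rmult_le_pos; auto. apply pow_le; lra.
    apply inv_pow_mono. lra.
Qed.

Lemma Tb_nonneg A : (1 <= A)%nat -> 0 <= Tb A.
Proof.
  intros HA. unfold Tb. apply Rmult_le_pos. left. apply Rinv_0_lt_compat, pow_lt, lt_0_INR; lia.
  unfold Rdiv. apply Rmult_le_pos. apply Rmult_le_pos; auto. apply Cmod_ge_0.
  left. apply Rinv_0_lt_compat, pow_lt. rewrite XA_parts.
  eapply Rlt_le_trans; [|apply one_minus_X_any; lia].
  pose proof PI_RGT_0. assert (1 <= IZR Nn) by (apply IZR_le; lia).
  assert (exp (-2 * PI / IZR Nn) < 1). { rewrite <- exp_0. apply exp_increasing. unfold Rdiv.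
    assert (0 < / IZR Nn) by (apply Rinv_0_lt_compat; lra). nra. }
  lra.
Qed.

Lemma Tb_small A : (1 <= A)%nat -> (Z.of_nat A < Nn)%Z ->
  Tb A <= K1 * IZR Nn ^ (S m) * / (INR A * IZR (del d Nn A)).
Proof.
  intros HA HAN.
  pose proof (one_minus_X_small d Nn A s HN Hg HA HAN Hs) as HY. rewrite <- XA_parts in HY.
  pose proof (del_bounds d Nn HN Hg A HA HAN) as [Hd1 Hd2].
  assert (HNr : 2 <= IZR Nn) by (apply IZR_le; lia).
  assert (HD : 1 <= IZR (del d Nn A)) by (apply IZR_le; lia).
  assert (Hk : 0 < kap) by (unfold kap; pose proof (exp_pos (- PI)); lra).
  set (D := IZR (del d Nn A)) in *.
  assert (HY0 : 0 < kap * (D / IZR Nn)) by (apply Rmult_lt_0_compat; auto; apply Rdiv_lt_0_compat; lra).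
  eapply Rle_trans. apply (Tb_gen A _ HA HY0). fold kap in HY. exact HY.
  pose proof rho_bounds.
  assert (HAr : 0 < INR A) by (apply lt_0_INR; lia).
  assert (Hrho : rho ^ A <= 1) by (apply pow_le1_compat || (clear -H; induction A; simpl; nra)).
  assert (E : / (kap * (D / IZR Nn)) ^ S m = / kap ^ S m * IZR Nn ^ S m * / D ^ S m).
  { rewrite !Rpow_mult_distr. unfold Rdiv. rewrite Rpow_mult_distr, pow_inv.
    field. repeat split; apply pow_nonzero; lra. }
  rewrite E.
  assert (HDm : / D ^ S m <= / D).
  { apply Rinv_le_contravar. lra. simpl. rewrite <- (Rmult_1_r D) at 1. apply Rmult_le_compat_l. lra. apply pow_R1_Rle. lra. }
  unfold K1. unfold Rdiv.
  assert (0 < / kap ^ S m) by (apply Rinv_0_lt_compat, pow_lt; lra).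
  assert (0 < IZR Nn ^ S m) by (apply pow_lt; lra).
  assert (0 < / D) by (apply Rinv_0_lt_compat; lra).
  assert (0 < / INR A) by (apply Rinv_0_lt_compat; lra).
  rewrite Rinv_mult.
  assert (0 <= rho ^ A) by (apply pow_le; lra).
  apply Rle_trans with (/ INR A * (C2 * 1 * (/ kap ^ S m * IZR Nn ^ S m * / D))).
  - apply Rmult_le_compat_l. lra. apply Rmult_le_compat. apply Rmult_le_pos; lra.
    left. apply Rmult_lt_0_compat. apply Rmult_lt_0_compat; lra. apply Rinv_0_lt_compat, pow_lt; lra.
    apply Rmult_le_compat_l; lra.
    apply Rmult_le_compat_l. left; apply Rmult_lt_0_compat; lra. auto.
  - apply Req_le. ring.
Qed.

Lemma Tb_large A : (Nn <= Z.of_nat A)%Z -> Tb A <= K2 / IZR Nn * rho ^ A.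
Proof.
  intros HAN. assert (HA : (1 <= A)%nat) by lia.
  pose proof (one_minus_X_large Nn A (INR A * IZR s / IZR Nn) ltac:(lia) HAN) as HY. rewrite <- XA_parts in HY.
  assert (H2 : 0 < / 2) by lra.
  eapply Rle_trans. apply (Tb_gen A _ HA H2 HY).
  assert (HNr : 2 <= IZR Nn) by (apply IZR_le; lia).
  assert (HAr : IZR Nn <= INR A) by (rewrite INR_IZR_INZ; apply IZR_le; auto).
  pose proof rho_bounds.
  assert (0 <= rho ^ A) by (apply pow_le; lra).
  rewrite pow_inv, Rinv_inv. unfold K2, Rdiv.
  replace (C2 * 2 ^ S m * / IZR Nn * rho ^ A) with (/ IZR Nn * (C2 * rho ^ A * 2 ^ S m)) by ring.
  apply Rmult_le_compat_r. apply Rmult_le_pos. apply Rmult_le_pos; auto. apply pow_le; lra.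
  apply Rinv_le_contravar; lra.
Qed.

Lemma Tb_any A : (1 <= A)%nat -> Tb A <= C2 / (1 - exp (-2 * PI / IZR Nn)) ^ (S m) * rho ^ A.
Proof.
  intros HA.
  pose proof (one_minus_X_any Nn A (INR A * IZR s / IZR Nn) ltac:(lia) HA) as HY. rewrite <- XA_parts in HY.
  assert (HNr : 2 <= IZR Nn) by (apply IZR_le; lia).
  pose proof PI_RGT_0.
  assert (Hd0 : 0 < 1 - exp (-2 * PI / IZR Nn)).
  { assert (exp (-2 * PI / IZR Nn) < 1). { rewrite <- exp_0. apply exp_increasing. unfold Rdiv.
    assert (0 < / IZR Nn) by (apply Rinv_0_lt_compat; lra). nra. } lra. }
  eapply Rle_trans. apply (Tb_gen A _ HA Hd0 HY).
  assert (1 <= INR A) by (apply (le_INR 1); lia).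
  pose proof rho_bounds.
  assert (0 <= rho ^ A) by (apply pow_le; lra).
  assert (0 < / (1 - exp (-2 * PI / IZR Nn)) ^ S m) by (apply Rinv_0_lt_compat, pow_lt; lra).
  apply Rle_trans with (1 * (C2 * rho ^ A * / (1 - exp (-2 * PI / IZR Nn)) ^ S m)).
  - apply Rmult_le_compat_r. apply Rmult_le_pos; [apply Rmult_le_pos|]; lra.
    rewrite <- Rinv_1. apply Rinv_le_contravar; lra.
  - apply Req_le. unfold Rdiv at 2. ring.
Qed.

Lemma main_bound : Cmod (double_sum chi1 chi2 k n z) <= Kfin * IZR (Mcf d Nn) * gam ^ m * ln (IZR Nn) ^ 2.
Proof.
  set (M := Mcf d Nn). pose proof (Mb d Nn HN Hg) as HM. fold M in HM.
  assert (HNr : 2 <= IZR Nn) by (apply IZR_le; lia).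
  assert (HMr : 1 <= IZR M) by (apply IZR_le; lia).
  pose proof rho_bounds as Hrho. pose proof gam_pos as Hgam.
  assert (HK1 : 0 <= K1).
  { unfold K1, kap. apply Rmult_le_pos; auto. left. apply Rinv_0_lt_compat, pow_lt. pose proof (exp_pos (- PI)). lra. }
  assert (HK2 : 0 <= K2) by (unfold K2; apply Rmult_le_pos; auto; apply pow_le; lra).
  assert (Hd0 : 0 < 1 - exp (-2 * PI / IZR Nn)).
  { pose proof PI_RGT_0. assert (exp (-2 * PI / IZR Nn) < 1). { rewrite <- exp_0. apply exp_increasing. unfold Rdiv.
    assert (0 < / IZR Nn) by (apply Rinv_0_lt_compat; lra). nra. } lra. }
  set (Kb := C2 / (1 - exp (-2 * PI / IZR Nn)) ^ (S m)).
  destruct (ex_series_C_le gterm (fun i => Kb * rho * rho ^ i)) as [L HL].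
  { intros i. eapply Rle_trans. apply gterm_bound. eapply Rle_trans. apply Tb_any. lia.
    fold Kb. apply Req_le. rewrite <- tech_pow_Rmult. ring. }
  { apply (ex_series_scal (K := R_AbsRing) (Kb * rho) (fun i => rho ^ i)). apply ex_series_geom.
    rewrite Rabs_pos_eq; lra. }
  rewrite double_sum_eq. rewrite (CSeries_is _ _ HL).
  set (Nn' := Z.to_nat Nn).
  set (B1 := fun A => if (1 <=? A)%nat then (if (A <? Nn')%nat then K1 * IZR Nn ^ (S m) * / (INR A * IZR (del d Nn A)) else 0) else 0).
  set (B2 := fun A => if (1 <=? A)%nat then K2 / IZR Nn * rho ^ A else 0).
  assert (HB1nn : forall A, 0 <= B1 A).
  { intros A. unfold B1. destruct (Nat.leb_spec 1 A); [|lra]. destruct (Nat.ltb_spec A Nn'); [|lra].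
    apply Rmult_le_pos. apply Rmult_le_pos; auto. apply pow_le; lra.
    left. apply Rinv_0_lt_compat. apply Rmult_lt_0_compat. apply lt_0_INR; lia.
    apply IZR_lt. pose proof (del_bounds d Nn HN Hg A ltac:(lia) ltac:(lia)). lia. }
  assert (HB2nn : forall A, 0 <= B2 A).
  { intros A. unfold B2. destruct (Nat.leb_spec 1 A); [|lra]. apply Rmult_le_pos.
    unfold Rdiv. apply Rmult_le_pos; auto. left; apply Rinv_0_lt_compat; lra. apply pow_le; lra. }
  assert (Hsum1 : forall N', fsum B1 N' <= 480 * K1 * IZR M * IZR Nn ^ m * ln (IZR Nn) ^ 2).
  { intros N'. eapply Rle_trans. apply (fsum_trunc B1 Nn'); auto.
    { intros A HA. unfold B1. destruct (1 <=? A)%nat; auto. destruct (Nat.ltb_spec A Nn'); auto; lia. }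
    rewrite (fsum_ext B1 (fun A => K1 * IZR Nn ^ (S m) * (if (1 <=? A)%nat then / (INR A * IZR (del d Nn A)) else 0))).
    2:{ intros i Hi. unfold B1. destruct (1 <=? i)%nat. destruct (Nat.ltb_spec i Nn'); [auto|lia]. ring. }
    rewrite fsum_scal. pose proof (dsum d Nn HN Hg) as Hds. fold M in Hds.
    apply Rle_trans with (K1 * IZR Nn ^ S m * (480 * IZR M * ln (IZR Nn) ^ 2 / IZR Nn)).
    - apply Rmult_le_compat_l; auto. apply Rmult_le_pos; auto. apply pow_le; lra.
    - apply Req_le. simpl pow. field. lra. }
  assert (Hsum2 : forall N', fsum B2 N' <= K2 * (1 + INR q2)).
  { intros N'. 
    apply Rle_trans with (K2 / IZR Nn * fsum (fun A => rho ^ A) N').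
    - rewrite <- fsum_scal. apply fsum_le. intros i _. unfold B2. destruct (1 <=? i)%nat. lra.
      apply Rmult_le_pos. unfold Rdiv. apply Rmult_le_pos; auto. left; apply Rinv_0_lt_compat; lra. apply pow_le; lra.
    - pose proof (geom_fsum rho N' ltac:(lra)).
      pose proof (inv_exp_bound gam ltac:(lra)). fold rho in H0.
      assert (0 <= K2 / IZR Nn) by (unfold Rdiv; apply Rmult_le_pos; auto; left; apply Rinv_0_lt_compat; lra).
      apply Rle_trans with (K2 / IZR Nn * (1 + gam)).
      + apply Rmult_le_compat_l; auto. lra.
      + rewrite gam_eq. unfold Rdiv. 
        replace (K2 * / IZR Nn * (1 + INR q2 * IZR Nn)) with (K2 * (/ IZR Nn + INR q2)) by (field; lra).
        apply Rmult_le_compat_l; auto. assert (/ IZR Nn <= 1) by (rewrite <- Rinv_1; apply Rinv_le_contravar; lra). lra. }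
  apply Cmod_series_le with (1 := HL). intros N.
  eapply Rle_trans. apply Cmod_sum_n.
  eapply Rle_trans. apply sum_n_R_le with (b := fun i => Tb (S i)). intros; apply gterm_bound.
  rewrite (sum_n_fsum Tb N).
  eapply Rle_trans. apply fsum_le with (g := fun A => B1 A + B2 A).
  { intros A _. unfold B1, B2. destruct (Nat.leb_spec 1 A); [|lra].
    destruct (Nat.ltb_spec A Nn').
    - pose proof (Tb_small A H ltac:(lia)). 
      assert (0 <= K2 / IZR Nn * rho ^ A) by (apply Rmult_le_pos; [unfold Rdiv; apply Rmult_le_pos; auto; left; apply Rinv_0_lt_compat; lra|apply pow_le; lra]).
      lra.
    - pose proof (Tb_large A ltac:(lia)). lra. }
  rewrite fsum_plus.
  pose proof (Hsum1 (S (S N))). pose proof (Hsum2 (S (S N))).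
  assert (HlnN : / 2 < ln (IZR Nn)) by (apply ln_ge_half; auto).
  assert (Hpm : IZR Nn ^ m <= gam ^ m).
  { apply pow_incr. split. lra. rewrite gam_eq. assert (1 <= INR q2) by (apply (le_INR 1); lia). nra. }
  assert (Hgm : 1 <= gam ^ m) by (apply pow_R1_Rle; lra).
  assert (Hl2 : / 4 <= ln (IZR Nn) ^ 2) by nra.
  assert (0 <= IZR Nn ^ m) by (apply pow_le; lra).
  assert (0 <= ln (IZR Nn) ^ 2) by apply pow2_ge_0.
  assert (0 <= INR q2) by apply pos_INR.
  unfold Kfin.
  assert (E1 : 480 * K1 * IZR M * IZR Nn ^ m * ln (IZR Nn) ^ 2 <= 480 * K1 * IZR M * gam ^ m * ln (IZR Nn) ^ 2).
  { apply Rmult_le_compat_r; auto. apply Rmult_le_compat_l; auto. apply Rmult_le_pos; [|lra]. apply Rmult_le_pos; lra. }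
  assert (E2 : K2 * (1 + INR q2) <= 4 * K2 * (1 + INR q2) * IZR M * gam ^ m * ln (IZR Nn) ^ 2).
  { assert (1 <= IZR M * gam ^ m * (4 * ln (IZR Nn) ^ 2)).
    { assert (1 <= 4 * ln (IZR Nn) ^ 2) by lra.
      assert (1 <= IZR M * gam ^ m) by nra. nra. }
    assert (0 <= K2 * (1 + INR q2)) by (apply Rmult_le_pos; lra).
    replace (4 * K2 * (1 + INR q2) * IZR M * gam ^ m * ln (IZR Nn) ^ 2) with
      (K2 * (1 + INR q2) * (IZR M * gam ^ m * (4 * ln (IZR Nn) ^ 2))) by ring.
    nra. }
  lra.
Qed.

End Main.

Theorem lemma4p8 (k : nat) (q1 q2 : nat) (chi1 chi2 : Z -> C) (n : nat) :
  (2 <= k)%nat ->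
  primitive_char_conductor q1 chi1 -> nontrivial_char chi1 ->
  primitive_char_conductor q2 chi2 -> nontrivial_char chi2 ->
  (n <= k - 2)%nat ->
  exists K : R,
    forall a b c d : Z,
      in_Gamma0 (q1 * q2) a b c d -> (1 <= c)%Z ->
      let c' := IZR c / INR q2 in
      let z1 : C := Cdiv (Cplus Ci (RtoC (- IZR d))) (RtoC (IZR c)) in
      let gz1 : C := Cdiv (Cplus Ci (RtoC (IZR a))) (RtoC (IZR c)) in
      Cmod (double_sum chi1 chi2 k n z1)
        <= K * IZR (Mcf d (c / Z.of_nat q2)) * IZR c ^ (k - n - 2) * (ln c') ^ 2
      /\
      Cmod (double_sum chi1 chi2 k n gz1)
        <= K * IZR (Mcf a (c / Z.of_nat q2)) * IZR c ^ (k - n - 2) * (ln c') ^ 2.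
Proof.
  intros Hk Hp1 Hn1 Hp2 Hn2 Hn.
  destruct Hp1 as [Hc1 _]. destruct Hp2 as [Hc2 _].
  destruct (inner_bound q2 chi2 (k - n - 2) Hc2) as [C2 [HC2 Hin]].
  assert (Hq2 : (1 <= q2)%nat) by (destruct Hc2; lia).
  assert (Hq1 : (2 <= q1)%nat) by (apply (chi_q_ge2 q1 chi1 Hc1 Hn1)).
  exists (Kfin q2 (k - n - 2) C2).
  intros a b c d [Hdet Hdiv] Hc c' z1 gz1.
  destruct Hdiv as [t Ht]. rewrite Nat2Z.inj_mul in Ht.
  set (Nn := (t * Z.of_nat q1)%Z).
  assert (HcN : c = (Z.of_nat q2 * Nn)%Z) by (unfold Nn; rewrite Ht; ring).
  assert (Hdiv : (c / Z.of_nat q2 = Nn)%Z).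
  { rewrite HcN. rewrite Z.mul_comm. apply Z.div_mul. lia. }
  assert (HN : (2 <= Nn)%Z).
  { assert (1 <= t)%Z by (destruct (Z.le_gt_cases 1 t); auto; nia). unfold Nn. nia. }
  assert (Hc' : c' = IZR Nn).
  { unfold c'. rewrite HcN, mult_IZR, <- INR_IZR_INZ. field. apply not_0_INR; lia. }
  rewrite Hdiv, Hc'.
  assert (Hgd : Z.gcd d Nn = 1%Z).
  { apply Z.bezout_1_gcd. exists a, (- b * Z.of_nat q2)%Z. rewrite <- Hdet, HcN. ring. }
  assert (Hga : Z.gcd a Nn = 1%Z).
  { apply Z.bezout_1_gcd. exists d, (- b * Z.of_nat q2)%Z. rewrite <- Hdet, HcN. ring. }
  split.
  - unfold z1. rewrite <- opp_IZR.
    apply (main_bound q1 q2 chi1 chi2 k n (k - n - 2) C2 Hc1 Hq2 eq_refl HC2 Hin d Nn c (- d)); auto.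
  - unfold gz1.
    apply (main_bound q1 q2 chi1 chi2 k n (k - n - 2) C2 Hc1 Hq2 eq_refl HC2 Hin a Nn c a); auto.
Qed.
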